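(* Let $\Omega\subset\mathbb{R}^3$ be open, $T>0$, and let $A:[0,T]\times\Omega\to\mathbb{T}$ and $\gamma:[0,T]\times\Omega\to\mathbb{S}$ be sufficiently smooth (classical) fields solving $$\operatorname{div} A=0,\qquad A_t+\operatorname{curl} S\gamma=0,\qquad S\gamma_t-\operatorname{sym}\operatorname{curl} A=0,\qquad \operatorname{div}\operatorname{div} S\gamma=0,$$ with initial conditions $A(0)=A_0$, $\gamma(0)=\gamma_0$. Define the gauge functions $$\alpha:=\tfrac12\operatorname{tr}\gamma,\qquad \beta(t):=\tfrac12\int_0^t \operatorname{div} S\gamma(s)\,ds+\operatorname{vskw} A_0 .$$ Then $\gamma$ satisfies the linearized York version of the ADM equations: $$\gamma_{tt}+S\operatorname{inc}\gamma-2\operatorname{hess}\alpha-2\operatorname{def}\beta_t=0,\qquad \operatorname{div} S(\gamma_t-2\operatorname{def}\beta)=0,\qquad \operatorname{div}\operatorname{div} S\gamma=0 .$$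
   Context: $\mathbb{M}$ is the space of real $3\times3$ matrices, $\mathbb{S}$ the symmetric ones, $\mathbb{T}$ the trace-free ones. For $M\in\mathbb{M}$: $S(M):=M^\top-\operatorname{tr}(M)I$; $\operatorname{sym}M$ is the symmetric part; $(\operatorname{vskw}M)_i:=-\tfrac12\epsilon_{ijk}M_{jk}$ (Levi-Civita symbol, summation convention). Differential operators act column-wise on matrix fields: $(\operatorname{curl}M)_{ij}=\epsilon_{ikl}\partial_kM_{lj}$, $(\operatorname{div}M)_i=\partial_jM_{ji}$; for a vector field $v$, $(\operatorname{grad}v)_{ij}=\partial_iv_j$, $\operatorname{def}v:=\operatorname{sym}\operatorname{grad}v$; for a scalar $u$, $\operatorname{hess}u$ is the Hessian matrix; $\operatorname{div}\operatorname{div}\sigma:=\operatorname{div}(\operatorname{div}\sigma)$; $\operatorname{inc}M:=\operatorname{curl}\big((\operatorname{curl}M)^\top\big)$. Subscript $t$ denotes time derivative. *)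

(* Defs.v *)
From Stdlib Require Import Reals Lra List.
From Coquelicot Require Import Coquelicot.
Open Scope R_scope.

Definition R3 : Type := (R * R * R)%type.

Definition coord (x : R3) (k : nat) : R :=
  match k with
  | O => fst (fst x)
  | S O => snd (fst x)
  | _ => snd x
  end.

Definition upd (x : R3) (k : nat) (s : R) : R3 :=
  match k with
  | O => (s, snd (fst x), snd x)
  | S O => (fst (fst x), s, snd x)
  | _ => (fst (fst x), snd (fst x), s)
  end.

Definition sum3 (f : nat -> R) : R := f 0%nat + f 1%nat + f 2%nat.

Definition kron (i j : nat) : R := if Nat.eqb i j then 1 else 0.

Definition eps (i j k : nat) : R :=
  match i, j, k with
  | 0%nat, 1%nat, 2%nat | 1%nat, 2%nat, 0%nat | 2%nat, 0%nat, 1%nat => 1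
  | 0%nat, 2%nat, 1%nat | 2%nat, 1%nat, 0%nat | 1%nat, 0%nat, 2%nat => -1
  | _, _, _ => 0
  end.

(** Fields on space-time: scalar, vector and 3x3-matrix valued
    (indices 0,1,2 only are meaningful). *)
Definition sfield : Type := R -> R3 -> R.
Definition vfield : Type := R -> R3 -> nat -> R.
Definition mfield : Type := R -> R3 -> nat -> nat -> R.

Definition dt (g : sfield) : sfield := fun t x => Derive (fun s => g s x) t.
Definition dx (k : nat) (g : sfield) : sfield :=
  fun t x => Derive (fun s => g t (upd x k s)) (coord x k).

Definition pd (d : nat) (g : sfield) : sfield :=
  match d with O => dt g | S k => dx k g end.

Definition ex_pd (d : nat) (g : sfield) (t : R) (x : R3) : Prop :=
  match d with
  | O => ex_derive (fun s => g s x) t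
  | S k => ex_derive (fun s => g t (upd x k s)) (coord x k)
  end.

Definition iter_pd (l : list nat) (g : sfield) : sfield := fold_right pd g l.

Definition smooth_on (U : R -> R3 -> Prop) (g : sfield) : Prop :=
  forall (l : list nat) (t : R) (x : R3), U t x ->
    (forall d, (d <= 3)%nat -> ex_pd d (iter_pd l g) t x) /\
    continuous (fun p : R * R3 => iter_pd l g (fst p) (snd p)) (t, x).

Definition smooth_on_m (U : R -> R3 -> Prop) (F : mfield) : Prop :=
  forall i j, (i < 3)%nat -> (j < 3)%nat -> smooth_on U (fun t x => F t x i j).

Definition mat : Type := nat -> nat -> R.
Definition tr (M : mat) : R := sum3 (fun i => M i i).
Definition trans (M : mat) : mat := fun i j => M j i.
Definition Sop (M : mat) : mat := fun i j => M j i - tr M * kron i j.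
Definition sym (M : mat) : mat := fun i j => (M i j + M j i) / 2.
Definition vskw (M : mat) : nat -> R :=
  fun i => - / 2 * sum3 (fun j => sum3 (fun k => eps i j k * M j k)).

Definition is_sym (M : mat) : Prop :=
  forall i j, (i < 3)%nat -> (j < 3)%nat -> M i j = M j i.
Definition is_tracefree (M : mat) : Prop := tr M = 0.

Definition Sf (F : mfield) : mfield := fun t x => Sop (F t x).
Definition symf (F : mfield) : mfield := fun t x => sym (F t x).
Definition transf (F : mfield) : mfield := fun t x => trans (F t x).
Definition trf (F : mfield) : sfield := fun t x => tr (F t x).

Definition dtM (F : mfield) : mfield :=
  fun t x i j => dt (fun t' x' => F t' x' i j) t x.
Definition dtV (v : vfield) : vfield :=
  fun t x i => dt (fun t' x' => v t' x' i) t x.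

(** Spatial differential operators (column-wise on matrix fields). *)
Definition curl (F : mfield) : mfield :=
  fun t x i j =>
    sum3 (fun k => sum3 (fun l => eps i k l * dx k (fun t' x' => F t' x' l j) t x)).
Definition div (F : mfield) : vfield :=
  fun t x i => sum3 (fun j => dx j (fun t' x' => F t' x' j i) t x).
Definition divv (v : vfield) : sfield :=
  fun t x => sum3 (fun i => dx i (fun t' x' => v t' x' i) t x).
Definition divdiv (F : mfield) : sfield := divv (div F).
Definition grad (v : vfield) : mfield :=
  fun t x i j => dx i (fun t' x' => v t' x' j) t x.
Definition def (v : vfield) : mfield := symf (grad v).
Definition hess (u : sfield) : mfield :=
  fun t x i j => dx i (dx j u) t x.
Definition inc (F : mfield) : mfield := curl (transf (curl F)).

Definition maddf (F G : mfield) : mfield := fun t x i j => F t x i j + G t x i j.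
Definition mscalef (c : R) (F : mfield) : mfield := fun t x i j => c * F t x i j.

(* Main.v *)
Require Import Defs.
From Stdlib Require Import Reals Lra Lia List Permutation FunctionalExtensionality.
From Coquelicot Require Import Coquelicot.
Open Scope R_scope.
Import ListNotations.

Definition getc (p : R * R3) (d : nat) : R :=
  match d with O => fst p | S k => coord (snd p) k end.
Definition setc (p : R * R3) (d : nat) (s : R) : R * R3 :=
  match d with O => (s, snd p) | S k => (fst p, upd (snd p) k s) end.
Definition G2 (g : sfield) (p : R * R3) : R := g (fst p) (snd p).

Lemma pd_setc : forall d g t x,
  pd d g t x = Derive (fun s => G2 g (setc (t, x) d s)) (getc (t, x) d).
Proof. intros [|k] g t x; reflexivity. Qed.

Lemma ex_pd_setc : forall d g t x,
  ex_pd d g t x <-> ex_derive (fun s => G2 g (setc (t, x) d s)) (getc (t, x) d).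
Proof. intros [|k] g t x; reflexivity. Qed.

Lemma getc_setc : forall p d s, getc (setc p d s) d = s.
Proof. intros [t [[a b] c]] [|[|[|k]]] s; reflexivity. Qed.
Lemma setc_setc : forall p d u v, setc (setc p d u) d v = setc p d v.
Proof. intros [t [[a b] c]] [|[|[|k]]] u v; reflexivity. Qed.
Lemma setc_getc : forall p d, setc p d (getc p d) = p.
Proof. intros [t [[a b] c]] [|[|[|k]]]; reflexivity. Qed.
Lemma setc_comm : forall p d1 d2 u v, (d1 <= 3)%nat -> (d2 <= 3)%nat -> d1 <> d2 ->
  setc (setc p d1 u) d2 v = setc (setc p d2 v) d1 u.
Proof.
  intros [t [[a b] c]] d1 d2 u v H1 H2 H3.
  destruct d1 as [|[|[|[|d1]]]]; destruct d2 as [|[|[|[|d2]]]];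
    try lia; reflexivity.
Qed.
Lemma getc_setc_o : forall p d1 d2 u, (d1 <= 3)%nat -> (d2 <= 3)%nat -> d1 <> d2 ->
  getc (setc p d1 u) d2 = getc p d2.
Proof.
  intros [t [[a b] c]] d1 d2 u H1 H2 H3.
  destruct d1 as [|[|[|[|d1]]]]; destruct d2 as [|[|[|[|d2]]]];
    try lia; reflexivity.
Qed.

Lemma pd_clamp : forall d g t x, pd d g t x = pd (Nat.min d 3) g t x.
Proof. intros [|[|[|[|d]]]] g t x; reflexivity. Qed.
Lemma pd_clamp_f : forall d g, pd d g = pd (Nat.min d 3) g.
Proof. intros; do 2 (apply functional_extensionality; intro); apply pd_clamp. Qed.
Lemma ex_pd_clamp : forall d g t x, ex_pd d g t x <-> ex_pd (Nat.min d 3) g t x.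
Proof. intros [|[|[|[|d]]]] g t x; reflexivity. Qed.

Lemma cont_pair {A B C : UniformSpace} (f : A -> B) (g : A -> C) (a : A) :
  continuous f a -> continuous g a -> continuous (fun y => (f y, g y)) a.
Proof.
  intros Hf Hg P [eps HP].
  unfold filtermap.
  apply (filter_imp (F := locally a)) with (fun y => ball (f a) eps (f y) /\ ball (g a) eps (g y)).
  - intros y [H1 H2]; apply HP; split; assumption.
  - apply filter_and; [apply Hf | apply Hg]; apply locally_ball.
Qed.
Lemma cont_fstc {A B C : UniformSpace} (f : A -> B * C) (a : A) :
  continuous f a -> continuous (fun y => fst (f y)) a.
Proof.
  intros Hf. apply continuous_comp; auto. destruct (f a); apply continuous_fst.
Qed.
Lemma cont_sndc {A B C : UniformSpace} (f : A -> B * C) (a : A) :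
  continuous f a -> continuous (fun y => snd (f y)) a.
Proof.
  intros Hf. apply continuous_comp; auto. destruct (f a); apply continuous_snd.
Qed.

Ltac solve_cont := repeat match goal with
 | |- continuous (fun y => (@?F y, @?G y)) _ => refine (cont_pair F G _ _ _)
 | |- continuous (fun y => fst (@?F y)) _ => refine (cont_fstc F _ _)
 | |- continuous (fun y => snd (@?F y)) _ => refine (cont_sndc F _ _)
 | |- continuous (fun y => y) _ => apply continuous_id
 | |- continuous (fun _ => ?c) _ => apply continuous_const
 end.

Lemma cont_setc2 : forall d (z : (R * R3) * R),
  continuous (fun z : (R * R3) * R => setc (fst z) d (snd z)) z.
Proof.
  intros [|[|[|k]]] z; unfold setc, upd; simpl; solve_cont.

Qed.

Lemma cont_setc : forall (p : R * R3) d s, continuous (fun s => setc p d s) s.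
Proof.
  intros p d s.
  apply (continuous_comp (fun s : R => (p, s)) (fun z : (R*R3)*R => setc (fst z) d (snd z))).
  - solve_cont.
  - apply cont_setc2.
Qed.

Lemma cont_open {A B : UniformSpace} (f : A -> B) (a : A) (P : B -> Prop) :
  continuous f a -> open P -> P (f a) -> locally a (fun y => P (f y)).
Proof. intros Hf HP Pa. apply Hf. apply HP. exact Pa. Qed.

Lemma G2_pd : forall d g q, G2 (pd d g) q = Derive (fun s => G2 g (setc q d s)) (getc q d).
Proof. intros d g [t x]; apply pd_setc. Qed.

Lemma iter_pd_app : forall l1 l2 g, iter_pd l1 (iter_pd l2 g) = iter_pd (l1 ++ l2) g.
Proof. intros; unfold iter_pd; rewrite fold_right_app; reflexivity. Qed.

Section SmoothU.
Variable U : R -> R3 -> Prop.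
Hypothesis HU : open (fun p : R * R3 => U (fst p) (snd p)).

Lemma U_line : forall t x d, U t x ->
  locally (getc (t,x) d) (fun s => U (fst (setc (t,x) d s)) (snd (setc (t,x) d s))).
Proof.
  intros t x d Hx.
  apply (cont_open (setc (t,x) d) _ (fun p : R * R3 => U (fst p) (snd p))).
  - apply cont_setc.
  - exact HU.
  - rewrite setc_getc; exact Hx.
Qed.

Lemma pd_loc_U : forall d F G t x, (forall t x, U t x -> F t x = G t x) -> U t x ->
  pd d F t x = pd d G t x.
Proof.
  intros d F G t x H Hx. rewrite !pd_setc. apply Derive_ext_loc.
  eapply filter_imp; [|apply (U_line t x d Hx)]. intros s Hs. unfold G2. apply H. exact Hs.
Qed.

Lemma sm_iter : forall g l, smooth_on U g -> smooth_on U (iter_pd l g).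
Proof.
  intros g l Hg l' t x Hx. rewrite iter_pd_app. apply Hg. exact Hx.
Qed.

Lemma sm_pd : forall g d, smooth_on U g -> smooth_on U (pd d g).
Proof. intros g d Hg. apply (sm_iter g [d] Hg). Qed.

Lemma sm_ex : forall g t x d, smooth_on U g -> U t x -> ex_pd d g t x.
Proof.
  intros g t x d Hg Hx. apply ex_pd_clamp. apply (Hg [] t x Hx). lia.
Qed.

Lemma sm_cont : forall g t x, smooth_on U g -> U t x ->
  continuous (fun p : R * R3 => g (fst p) (snd p)) (t, x).
Proof. intros g t x Hg Hx. apply (Hg [] t x Hx). Qed.

Lemma Schwarz_core : forall g t x d1 d2, smooth_on U g -> U t x ->
  (d1 <= 3)%nat -> (d2 <= 3)%nat -> d1 <> d2 ->
  pd d1 (pd d2 g) t x = pd d2 (pd d1 g) t x.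
Proof.
  intros g t x d1 d2 Hg Hx H1 H2 H12.
  set (p := (t, x)).
  set (x0 := getc p d1). set (y0 := getc p d2).
  set (f := fun u v => G2 g (setc (setc p d1 u) d2 v)).
  set (Q := fun w : R * R => setc (setc p d1 (fst w)) d2 (snd w)).
  assert (H21 : d2 <> d1) by lia.
  assert (Qi : forall u v z, setc (Q (u,v)) d1 z = setc (setc p d2 v) d1 z).
  { intros u v z; unfold Q; simpl. rewrite (setc_comm p d1 d2 u v) by lia. apply setc_setc. }
  assert (Qii : forall u v z, setc (Q (u,v)) d2 z = setc (setc p d1 u) d2 z).
  { intros u v z; unfold Q; simpl. apply setc_setc. }
  assert (Qiii : forall u v, getc (Q (u,v)) d1 = u).
  { intros u v; unfold Q; simpl. rewrite getc_setc_o by lia. apply getc_setc. }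
  assert (Qiv : forall u v, getc (Q (u,v)) d2 = v).
  { intros u v; unfold Q; simpl. apply getc_setc. }
  assert (EQc : forall u v z, G2 (pd d2 g) (setc (Q (u,v)) d1 z) = Derive (fun s => f z s) v).
  { intros u v z. rewrite G2_pd. rewrite Qi. rewrite getc_setc_o by lia. rewrite getc_setc.
    apply Derive_ext. intro r. unfold f. f_equal. rewrite (setc_comm p d2 d1 v z) by lia. apply setc_setc. }
  assert (EQd : forall u v z, G2 (pd d1 g) (setc (Q (u,v)) d2 z) = Derive (fun s => f s z) u).
  { intros u v z. rewrite G2_pd. rewrite Qii. rewrite getc_setc_o by lia. rewrite getc_setc.
    apply Derive_ext. intro r. unfold f. f_equal. rewrite (setc_comm p d1 d2 u z) by lia.
    rewrite setc_setc. apply setc_comm; lia. }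
  assert (HQ : continuous Q (x0, y0)).
  { unfold Q.
    apply (continuous_comp_2 (fun w : R * R => setc p d1 (fst w)) (fun w : R*R => snd w)
             (fun q s => setc q d2 s)).
    - apply (continuous_comp (fun w : R * R => fst w) (fun s => setc p d1 s)).
      + solve_cont.
      + apply cont_setc.
    - solve_cont.
    - apply cont_setc2. }
  assert (HQ0 : Q (x0, y0) = p).
  { unfold Q; simpl. unfold x0, y0. rewrite setc_getc. apply setc_getc. }
  assert (HUQ : locally (x0, y0) (fun w => U (fst (Q w)) (snd (Q w)))).
  { apply (cont_open Q _ (fun q : R * R3 => U (fst q) (snd q))); auto.
    rewrite HQ0. exact Hx. }
  transitivity (Derive (fun u => Derive (fun v => f u v) y0) x0).
  { rewrite pd_setc. apply Derive_ext. intro u. rewrite G2_pd.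
    rewrite getc_setc_o by lia. reflexivity. }
  transitivity (Derive (fun v => Derive (fun u => f u v) x0) y0).
  2:{ rewrite pd_setc. apply Derive_ext. intro v. rewrite G2_pd.
    rewrite getc_setc_o by lia. apply Derive_ext. intro u. unfold f.
    f_equal; apply setc_comm; lia. }
  apply Schwarz.
  - apply locally_2d_locally. eapply filter_imp; [|exact HUQ].
    intros [u v] HUq; simpl.
    assert (Hq : forall l d, ex_pd d (iter_pd l g) (fst (Q (u,v))) (snd (Q (u,v)))).
    { intros l d; apply sm_ex; auto. apply sm_iter; auto. }
    repeat split.
    + generalize (Hq [] d1). rewrite ex_pd_setc. rewrite <- surjective_pairing.
      rewrite Qiii. apply ex_derive_ext. intro z. rewrite Qi. unfold f.
      f_equal. apply setc_comm; lia.
    + generalize (Hq [] d2). rewrite ex_pd_setc. rewrite <- surjective_pairing.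
      rewrite Qiv. apply ex_derive_ext. intro z. rewrite Qii. reflexivity.
    + generalize (Hq [d2] d1). rewrite ex_pd_setc. rewrite <- surjective_pairing.
      rewrite Qiii. apply ex_derive_ext. intro z. apply EQc.
    + generalize (Hq [d1] d2). rewrite ex_pd_setc. rewrite <- surjective_pairing.
      rewrite Qiv. apply ex_derive_ext. intro z. apply EQd.
  - apply continuity_2d_pt_filterlim.
    assert (E : forall u v, Derive (fun z => Derive (fun s => f z s) v) u
                        = G2 (pd d1 (pd d2 g)) (Q (u,v))).
    { intros u v. rewrite G2_pd. rewrite Qiii. apply Derive_ext. intro z.
      rewrite <- EQc with (u := u). reflexivity. }
    rewrite E.
    replace (fun z : R * R => Derive (fun z0 => Derive (fun s => f z0 s) (snd z)) (fst z))
      with (fun w : R * R => G2 (pd d1 (pd d2 g)) (Q w)).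
    2:{ apply functional_extensionality. intros [u v]. simpl. symmetry. apply E. }
    apply (continuous_comp Q (G2 (pd d1 (pd d2 g)))); auto.
    rewrite HQ0. apply (Hg [d1; d2] t x Hx).
  - apply continuity_2d_pt_filterlim.
    assert (E : forall u v, Derive (fun z => Derive (fun s => f s z) u) v
                        = G2 (pd d2 (pd d1 g)) (Q (u,v))).
    { intros u v. rewrite G2_pd. rewrite Qiv. apply Derive_ext. intro z.
      rewrite <- EQd with (v := v). reflexivity. }
    replace (fun z : R * R => Derive (fun z0 => Derive (fun s => f s z0) (fst z)) (snd z))
      with (fun w : R * R => G2 (pd d2 (pd d1 g)) (Q w)).
    2:{ apply functional_extensionality. intros [u v]. simpl. symmetry. apply E. }
    rewrite E.
    apply (continuous_comp Q (G2 (pd d2 (pd d1 g)))); auto.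
    rewrite HQ0. apply (Hg [d2; d1] t x Hx).
Qed.

Lemma Schwarz_U : forall g t x d1 d2, smooth_on U g -> U t x ->
  pd d1 (pd d2 g) t x = pd d2 (pd d1 g) t x.
Proof.
  intros g t x d1 d2 Hg Hx.
  rewrite (pd_clamp d1), (pd_clamp d2), (pd_clamp_f d1 g), (pd_clamp_f d2 g).
  destruct (Nat.eq_dec (Nat.min d1 3) (Nat.min d2 3)) as [E|E].
  - rewrite E; reflexivity.
  - apply Schwarz_core; auto; lia.
Qed.

Lemma perm_iter : forall g l l', smooth_on U g -> Permutation l l' ->
  forall t x, U t x -> iter_pd l g t x = iter_pd l' g t x.
Proof.
  intros g l l' Hg HP. induction HP; intros t0 x0 Hx.
  - reflexivity.
  - simpl. apply pd_loc_U; auto.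
  - simpl. apply Schwarz_U; auto. apply sm_iter; auto.
  - rewrite IHHP1, IHHP2; auto.
Qed.

End SmoothU.

Lemma deriv_bound : forall (f g : R -> R) t T, 0 < T -> 0 <= t <= T ->
  ex_derive f t -> ex_derive g t -> (forall s, 0 <= s <= T -> f s = g s) ->
  Derive f t = Derive g t.
Proof.
  intros f g t T HT Ht Hf Hg Hfg.
  set (l := Derive f t - Derive g t).
  assert (Hd : derivable_pt_lim (fun s => f s - g s) t l).
  { apply is_derive_Reals. apply (is_derive_minus f g t (Derive f t) (Derive g t));
    apply Derive_correct; assumption. }
  assert (Hs : forall eps, 0 < eps -> Rabs l < eps).
  { intros eps He. destruct (Hd eps He) as [delta Hdel].
    assert (Hdp := cond_pos delta).
    destruct (Rlt_or_le t T) as [HtT|HtT].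
    - set (h := Rmin (delta/2) (T - t)).
      assert (Hh1 : 0 < h) by (unfold h; apply Rmin_glb_lt; lra).
      assert (Hh2 : h <= delta/2) by apply Rmin_l.
      assert (Hh3 : h <= T - t) by apply Rmin_r.
      specialize (Hdel h ltac:(lra) ltac:(rewrite Rabs_pos_eq; lra)).
      rewrite (Hfg (t + h)) in Hdel by lra. rewrite (Hfg t) in Hdel by lra.
      replace ((g (t + h) - g (t + h) - (g t - g t)) / h - l) with (- l) in Hdel
        by (field; lra).
      rewrite Rabs_Ropp in Hdel; exact Hdel.
    - set (h := - Rmin (delta/2) T).
      assert (Hh1 : 0 < Rmin (delta/2) T) by (apply Rmin_glb_lt; lra).
      assert (Hh2 : Rmin (delta/2) T <= delta/2) by apply Rmin_l.
      assert (Hh3 : Rmin (delta/2) T <= T) by apply Rmin_r.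
      specialize (Hdel h ltac:(unfold h; lra) ltac:(unfold h; rewrite Rabs_Ropp, Rabs_pos_eq; lra)).
      rewrite (Hfg (t + h)) in Hdel by (unfold h; lra). rewrite (Hfg t) in Hdel by lra.
      replace ((g (t + h) - g (t + h) - (g t - g t)) / h - l) with (- l) in Hdel
        by (field; unfold h; lra).
      rewrite Rabs_Ropp in Hdel; exact Hdel. }
  assert (l = 0).
  { destruct (Req_dec l 0) as [E|E]; auto.
    assert (Hl := Hs (Rabs l) (Rabs_pos_lt l E)). lra. }
  unfold l in H. lra.
Qed.

Lemma coord_upd : forall x k u, coord (upd x k u) k = u.
Proof. intros [[a b] c] [|[|k]] u; reflexivity. Qed.
Lemma upd_upd : forall x k u v, upd (upd x k u) k v = upd x k v.
Proof. intros [[a b] c] [|[|k]] u v; reflexivity. Qed.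
Lemma upd_coord : forall x k, upd x k (coord x k) = x.
Proof. intros [[a b] c] [|[|k]]; reflexivity. Qed.
Lemma cont_upd : forall x k u, continuous (fun u => upd x k u) u.
Proof. intros x [|[|k]] u; unfold upd; solve_cont. Qed.

Lemma pd_plus : forall d F G t x, ex_pd d F t x -> ex_pd d G t x ->
  pd d (fun t x => F t x + G t x) t x = pd d F t x + pd d G t x.
Proof. intros [|k] F G t x H1 H2; apply Derive_plus; assumption. Qed.
Lemma ex_pd_plus : forall d F G t x, ex_pd d F t x -> ex_pd d G t x ->
  ex_pd d (fun t x => F t x + G t x) t x.
Proof.
  intros [|k] F G t x H1 H2; simpl in *.
  - apply (ex_derive_plus (fun s => F s x) (fun s => G s x)); assumption.
  - apply (ex_derive_plus (fun s => F t (upd x k s)) (fun s => G t (upd x k s))); assumption.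
Qed.
Lemma pd_scal : forall d c F t x, pd d (fun t x => c * F t x) t x = c * pd d F t x.
Proof. intros [|k] c F t x; apply Derive_scal. Qed.
Lemma ex_pd_scal : forall d c F t x, ex_pd d F t x -> ex_pd d (fun t x => c * F t x) t x.
Proof. intros [|k] c F t x H; apply ex_derive_scal; assumption. Qed.
Lemma pd_zero : forall d t x, pd d (fun _ _ => 0) t x = 0.
Proof. intros [|k] t x; simpl; unfold dt, dx; apply Derive_const. Qed.
Lemma ex_pd_zero : forall d t x, ex_pd d (fun _ _ => 0) t x.
Proof. intros [|k] t x; simpl; apply ex_derive_const. Qed.

Inductive term := Tm (c : R) (i : bool) (b : nat) (l : list nat) (p q : nat).
Definition tint (tm : term) : bool := match tm with Tm _ i _ _ _ _ => i end.
Definition noint (tl : list term) : Prop := forallb (fun tm => negb (tint tm)) tl = true.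
Definition dpush (d : nat) (tm : term) : term :=
  match tm with
  | Tm c i b l p q =>
    if i then match d with O => Tm c false b l p q | _ => Tm c true b (d :: l) p q end
    else Tm c false b (d :: l) p q
  end.
Definition intify (tl : list term) : list term :=
  map (fun tm => match tm with Tm c _ b l p q => Tm c true b l p q end) tl.
Definition tscale (k : R) (tl : list term) : list term :=
  map (fun tm => match tm with Tm c i b l p q => Tm (k * c) i b l p q end) tl.
Fixpoint insert (a : nat) (l : list nat) : list nat :=
  match l with [] => [a] | b :: r => if Nat.leb a b then a :: b :: r else b :: insert a r end.
Fixpoint isort (l : list nat) : list nat :=
  match l with [] => [] | a :: r => insert a (isort r) end.
Definition tcanon (tm : term) : term :=
  match tm with
  | Tm c i b l p q => Tm c i b (isort l) (if Nat.eqb b 0 then Nat.min p q else p)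
                          (if Nat.eqb b 0 then Nat.max p q else q)
  end.

Lemma perm_insert : forall a l, Permutation (a :: l) (insert a l).
Proof.
  intros a l; induction l as [|b r IH]; simpl; auto.
  destruct (Nat.leb a b); auto.
  eapply perm_trans; [apply perm_swap|]. apply perm_skip. exact IH.
Qed.
Lemma perm_isort : forall l, Permutation l (isort l).
Proof.
  induction l as [|a r IH]; simpl; auto.
  eapply perm_trans; [apply perm_skip; exact IH|]. apply perm_insert.
Qed.

Lemma noint_app : forall l1 l2, noint l1 -> noint l2 -> noint (l1 ++ l2).
Proof. unfold noint; intros; rewrite forallb_app, H, H0; reflexivity. Qed.
Lemma noint_scale : forall k l, noint l -> noint (tscale k l).
Proof. unfold noint, tscale; intros k l; induction l as [|[] r IH]; simpl; auto.
  intro H; apply andb_prop in H as [H1 H2]; rewrite H1; simpl; auto. Qed.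
Lemma noint_push : forall d l, noint l -> noint (map (dpush d) l).
Proof. unfold noint; intros d l; induction l as [|[c [|] b ll p q] r IH]; simpl; auto. Qed.

Section Terms.
Variables (Omega : R3 -> Prop) (T : R) (U : R -> R3 -> Prop).
Hypothesis HOmega : open Omega.
Hypothesis HT : 0 < T.
Hypothesis HU : open (fun p : R * R3 => U (fst p) (snd p)).
Hypothesis HUcov : forall t x, 0 <= t <= T -> Omega x -> U t x.
Variables (A gamma : mfield) (A0 gamma0 : R3 -> mat).
Hypothesis HAsm : smooth_on_m U A.
Hypothesis Hgsm : smooth_on_m U gamma.
Hypothesis HAT : forall t x, 0 <= t <= T -> Omega x -> is_tracefree (A t x).
Hypothesis HgS : forall t x, 0 <= t <= T -> Omega x -> is_sym (gamma t x).
Hypothesis Hdiv : forall t x i, 0 <= t <= T -> Omega x -> (i < 3)%nat -> div A t x i = 0.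
Hypothesis Hevo1 : forall t x i j, 0 <= t <= T -> Omega x -> (i < 3)%nat -> (j < 3)%nat ->
            dtM A t x i j + curl (Sf gamma) t x i j = 0.
Hypothesis Hevo2 : forall t x i j, 0 <= t <= T -> Omega x -> (i < 3)%nat -> (j < 3)%nat ->
            Sf (dtM gamma) t x i j - symf (curl A) t x i j = 0.
Hypothesis Hcons : forall t x, 0 <= t <= T -> Omega x -> divdiv (Sf gamma) t x = 0.
Hypothesis HA0 : forall x, Omega x -> A 0 x = A0 x.

Definition bs (b p q : nat) : sfield :=
  fun t x => (if Nat.eqb b 0 then gamma else A) t x (Nat.min p 2) (Nat.min q 2).

Lemma Hbs : forall b p q, smooth_on U (bs b p q).
Proof.
  intros b p q. unfold bs. destruct (Nat.eqb b 0).
  - apply Hgsm; lia.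
  - apply HAsm; lia.
Qed.
#[local] Hint Resolve Hbs : core.

Definition V (t : R) (x : R3) : Prop := 0 <= t <= T /\ Omega x.

Lemma V_U : forall t x, V t x -> U t x.
Proof. intros t x [H1 H2]; apply HUcov; auto. Qed.

Lemma Omega_line : forall x k, Omega x -> locally (coord x k) (fun u => Omega (upd x k u)).
Proof.
  intros x k Hx. apply (cont_open (fun u => upd x k u)); auto.
  apply cont_upd. rewrite upd_coord; exact Hx.
Qed.

Lemma cont_time : forall h t x, smooth_on U h -> U t x -> continuous (fun s => h s x) t.
Proof.
  intros h t x Hh Hx.
  apply (continuous_comp (fun s => (s, x)) (fun p : R * R3 => h (fst p) (snd p))).
  - solve_cont.
  - apply (sm_cont U); auto.
Qed.

Lemma seg : forall t x, V t x ->
  locally t (fun s => forall r, Rmin 0 s <= r <= Rmax 0 s -> U r x).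
Proof.
  intros t x [Ht Hx].
  assert (H : locally t (fun s => U s x)).
  { apply (cont_open (fun s => (s, x)) t (fun p : R * R3 => U (fst p) (snd p))); auto.
    solve_cont. }
  destruct H as [eps Heps]. exists eps. intros s Hs r Hr.
  change (Rabs (s + - t) < eps) in Hs.
  destruct (Rle_dec 0 r) as [H0|H0]; [destruct (Rle_dec r T) as [H1|H1]|].
  - apply HUcov; auto.
  - apply Rnot_le_lt in H1. apply Heps. change (Rabs (r + - t) < eps).
    destruct (Rle_dec 0 s) as [Hs0|Hs0].
    + rewrite Rmax_right in Hr by lra.
      rewrite Rabs_pos_eq by lra. rewrite Rabs_pos_eq in Hs by lra. lra.
    + apply Rnot_le_lt in Hs0. rewrite Rmax_left in Hr by lra. lra.
  - apply Rnot_le_lt in H0. apply Heps. change (Rabs (r + - t) < eps).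
    destruct (Rle_dec 0 s) as [Hs0|Hs0].
    + rewrite Rmin_left in Hr by lra. lra.
    + apply Rnot_le_lt in Hs0. rewrite Rmin_right in Hr by lra.
      rewrite Rabs_left by lra. rewrite Rabs_left in Hs by lra. lra.
Qed.

Lemma FTC_int : forall h t x, smooth_on U h -> V t x ->
  is_derive (fun s => RInt (fun r => h r x) 0 s) t (h t x).
Proof.
  intros h t x Hh Hx.
  apply (is_derive_RInt (V := R_NormedModule) (fun r => h r x) (fun s => RInt (fun r => h r x) 0 s) 0 t).
  - eapply filter_imp; [|apply (seg t x Hx)]. intros s Hs.
    apply (RInt_correct (V := R_CompleteNormedModule)). apply (ex_RInt_continuous (V := R_CompleteNormedModule)). intros z Hz.
    apply cont_time; auto.
  - apply cont_time; auto. apply V_U; auto.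
Qed.

Lemma PAR_int : forall h t x k, smooth_on U h -> V t x ->
  is_derive (fun u => RInt (fun s => h s (upd x k u)) 0 t) (coord x k)
            (RInt (fun s => pd (S k) h s x) 0 t).
Proof.
  intros h t x k Hh [Ht Hx].
  assert (Hmin : Rmin 0 t = 0) by (apply Rmin_left; lra).
  assert (Hmax : Rmax 0 t = t) by (apply Rmax_right; lra).
  apply (is_derive_RInt_param (fun u s => h s (upd x k u)) 0 t (coord x k)).
  - eapply filter_imp; [|apply (Omega_line x k Hx)]. intros y Hy s Hs.
    rewrite Hmin, Hmax in Hs.
    assert (HU1 : U s (upd x k y)) by (apply HUcov; auto; lra).
    generalize (sm_ex U h s (upd x k y) (S k) Hh HU1). simpl.
    rewrite coord_upd. apply ex_derive_ext. intro z. rewrite upd_upd. reflexivity.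
  - intros s Hs. rewrite Hmin, Hmax in Hs.
    apply continuity_2d_pt_filterlim.
    assert (E : forall u v, Derive (fun z => h v (upd x k z)) u
                          = G2 (pd (S k) h) (v, upd x k u)).
    { intros u v. unfold G2; simpl. unfold dx. rewrite coord_upd.
      apply Derive_ext. intro z. rewrite upd_upd. reflexivity. }
    replace (fun z : R * R => Derive (fun z0 => h (snd z) (upd x k z0)) (fst z))
      with (fun w : R * R => G2 (pd (S k) h) (snd w, upd x k (fst w))).
    2:{ apply functional_extensionality. intros [u v]. simpl. symmetry. apply E. }
    rewrite E.
    assert (HC : continuous (fun w : R * R => G2 (pd (S k) h) (snd w, upd x k (fst w))) (coord x k, s)).
    { apply (continuous_comp (fun w : R * R => (snd w, upd x k (fst w))) (G2 (pd (S k) h))).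
      + refine (cont_pair (fun w : R * R => snd w) (fun w : R * R => upd x k (fst w)) _ _ _).
        solve_cont.
        apply (continuous_comp (fun w : R * R => fst w) (fun u => upd x k u)).
        solve_cont. apply cont_upd.
      + cbn [fst snd]. rewrite upd_coord. apply (sm_cont U). apply (sm_pd U); auto. apply HUcov; auto; lra. }
    exact HC.
  - eapply filter_imp; [|apply (Omega_line x k Hx)]. intros y Hy.
    apply (ex_RInt_continuous (V := R_CompleteNormedModule)). intros z Hz. rewrite Hmin, Hmax in Hz.
    apply cont_time; auto. apply HUcov; auto; lra.
Qed.

Definition at0 (b : nat) (l : list nat) (p q : nat) (t : R) (x : R3) : R :=
  iter_pd l (bs b p q) t x.
Definition ati (b : nat) (l : list nat) (p q : nat) (t : R) (x : R3) : R :=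
  RInt (fun s => iter_pd l (bs b p q) s x) 0 t.
Definition tval (tm : term) (t : R) (x : R3) : R :=
  match tm with Tm c i b l p q => c * (if i then ati b l p q t x else at0 b l p q t x) end.
Fixpoint val (tl : list term) (t : R) (x : R3) : R :=
  match tl with [] => 0 | tm :: r => tval tm t x + val r t x end.

Lemma LIN_term_U : forall tm d t x, tint tm = false -> U t x ->
  ex_pd d (tval tm) t x /\ pd d (tval tm) t x = tval (dpush d tm) t x.
Proof.
  intros [c i b l p q] d t x Hi Hx; simpl in Hi; subst i.
  change (tval (Tm c false b l p q)) with (fun t x => c * at0 b l p q t x).
  change (tval (dpush d (Tm c false b l p q)) t x) with (c * at0 b (d :: l) p q t x).
  split.
  - apply (ex_pd_scal d c (fun t x => at0 b l p q t x)). unfold at0.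
    apply (sm_ex U); auto. apply (sm_iter U); auto.
  - rewrite (pd_scal d c (fun t x => at0 b l p q t x)). reflexivity.
Qed.

Lemma LIN_term_V : forall tm d t x, V t x ->
  ex_pd d (tval tm) t x /\ pd d (tval tm) t x = tval (dpush d tm) t x.
Proof.
  intros [c [|] b l p q] d t x Hx.
  - assert (Hh : smooth_on U (iter_pd l (bs b p q))) by (apply (sm_iter U); auto).
    destruct d as [|k].
    + assert (HD := FTC_int _ t x Hh Hx).
      change (ex_derive (fun s => c * ati b l p q s x) t /\
              Derive (fun s => c * ati b l p q s x) t = c * at0 b l p q t x).
      split.
      * apply ex_derive_scal. eexists; exact HD.
      * rewrite Derive_scal. unfold ati. f_equal. apply is_derive_unique. exact HD.
    + assert (HD := PAR_int _ t x k Hh Hx).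
      change (ex_derive (fun u => c * ati b l p q t (upd x k u)) (coord x k) /\
              Derive (fun u => c * ati b l p q t (upd x k u)) (coord x k)
              = c * ati b (S k :: l) p q t x).
      split.
      * apply ex_derive_scal. eexists; exact HD.
      * rewrite Derive_scal. unfold ati. f_equal. apply is_derive_unique. exact HD.
  - apply LIN_term_U; auto. apply V_U; auto.
Qed.

Lemma LIN_V : forall tl d t x, V t x ->
  ex_pd d (val tl) t x /\ pd d (val tl) t x = val (map (dpush d) tl) t x.
Proof.
  induction tl as [|tm r IH]; intros d t x Hx.
  - simpl. split. apply ex_pd_zero. apply pd_zero.
  - destruct (IH d t x Hx) as [E1 E2]. destruct (LIN_term_V tm d t x Hx) as [F1 F2].
    change (val (tm :: r)) with (fun t x => tval tm t x + val r t x).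
    split.
    + apply ex_pd_plus; auto.
    + rewrite pd_plus; auto. rewrite E2, F2. reflexivity.
Qed.

Lemma LIN_U : forall tl d t x, noint tl -> U t x ->
  ex_pd d (val tl) t x /\ pd d (val tl) t x = val (map (dpush d) tl) t x.
Proof.
  induction tl as [|tm r IH]; intros d t x Hn Hx.
  - simpl. split. apply ex_pd_zero. apply pd_zero.
  - unfold noint in Hn; simpl in Hn. apply andb_prop in Hn as [Hn1 Hn2].
    destruct (IH d t x Hn2 Hx) as [E1 E2].
    destruct (LIN_term_U tm d t x) as [F1 F2]; auto.
    { destruct (tint tm); auto. }
    change (val (tm :: r)) with (fun t x => tval tm t x + val r t x).
    split.
    + apply ex_pd_plus; auto.
    + rewrite pd_plus; auto. rewrite E2, F2. reflexivity.
Qed.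

Lemma cont_val_time : forall tl t x, noint tl -> U t x -> continuous (fun s => val tl s x) t.
Proof.
  induction tl as [|[c i b l p q] r IH]; intros t x Hn Hx.
  - simpl. apply continuous_const.
  - unfold noint in Hn; simpl in Hn. apply andb_prop in Hn as [Hn1 Hn2].
    destruct i; [discriminate|]. simpl.
    apply (continuous_plus (fun s => c * at0 b l p q s x) (fun s => val r s x)).
    + apply (continuous_mult (fun _ => c) (fun s => at0 b l p q s x)).
      apply continuous_const. unfold at0. apply cont_time; auto. apply (sm_iter U); auto.
    + apply IH; auto.
Qed.

Lemma RInt_val : forall tl s x, noint tl ->
  (forall r, Rmin 0 s <= r <= Rmax 0 s -> U r x) ->
  RInt (fun r => val tl r x) 0 s = val (intify tl) s x.
Proof.
  induction tl as [|[c i b l p q] r IH]; intros s x Hn Hseg.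
  - simpl. rewrite RInt_const. unfold scal; simpl. unfold mult; simpl. ring.
  - unfold noint in Hn; simpl in Hn. apply andb_prop in Hn as [Hn1 Hn2].
    destruct i; [discriminate|]. simpl.
    assert (E1 : ex_RInt (fun z => c * at0 b l p q z x) 0 s).
    { apply (ex_RInt_continuous (V := R_CompleteNormedModule)). intros z Hz.
      apply (continuous_mult (fun _ => c) (fun s => at0 b l p q s x)).
      apply continuous_const. unfold at0. apply cont_time; auto. apply (sm_iter U); auto. }
    assert (E2 : ex_RInt (fun z => val r z x) 0 s).
    { apply (ex_RInt_continuous (V := R_CompleteNormedModule)). intros z Hz. apply cont_val_time; auto. }
    transitivity (plus (RInt (fun z => c * at0 b l p q z x) 0 s) (RInt (fun z => val r z x) 0 s)).
    { apply (RInt_plus (fun z => c * at0 b l p q z x) (fun z => val r z x)); auto. }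
    unfold plus; simpl. rewrite IH; auto. f_equal.
    transitivity (scal c (RInt (fun z => at0 b l p q z x) 0 s)).
    { apply (RInt_scal (fun z => at0 b l p q z x)). apply (ex_RInt_continuous (V := R_CompleteNormedModule)). intros z Hz.
      unfold at0. apply cont_time; auto. apply (sm_iter U); auto. }
    reflexivity.
Qed.

Definition approx (F : sfield) (tl : list term) : Prop :=
  forall t x, V t x -> F t x = val tl t x.

Lemma pd_loc_S : forall k F G t x, (forall t x, V t x -> F t x = G t x) -> V t x ->
  pd (S k) F t x = pd (S k) G t x.
Proof.
  intros k F G t x H [Ht Hx]. simpl. unfold dx. apply Derive_ext_loc.
  eapply filter_imp; [|apply (Omega_line x k Hx)]. intros u Hu. apply H. split; auto.
Qed.

Lemma pd_loc_0 : forall F G t x, (forall t x, V t x -> F t x = G t x) -> V t x ->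
  ex_pd 0 F t x -> ex_pd 0 G t x -> pd 0 F t x = pd 0 G t x.
Proof.
  intros F G t x H [Ht Hx] H1 H2. simpl. unfold dt.
  apply (deriv_bound _ _ t T); auto. intros s Hs. apply H. split; auto.
Qed.

Lemma approx_dS : forall k F tl, approx F tl -> approx (pd (S k) F) (map (dpush (S k)) tl).
Proof.
  intros k F tl H t x Hx. rewrite (pd_loc_S k F (val tl)); auto.
  apply LIN_V; auto.
Qed.

Lemma approx_dx : forall k F tl, approx F tl -> approx (dx k F) (map (dpush (S k)) tl).
Proof. intros; apply (approx_dS k); auto. Qed.

Lemma approx_dt : forall F tl, approx F tl -> (forall t x, V t x -> ex_pd 0 F t x) ->
  approx (dt F) (map (dpush 0) tl).
Proof.
  intros F tl H HF t x Hx. change (dt F t x) with (pd 0 F t x).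
  rewrite (pd_loc_0 F (val tl)); auto.
  apply LIN_V; auto. apply LIN_V; auto.
Qed.

Lemma approx_ext : forall F G tl, (forall t x, V t x -> F t x = G t x) -> approx F tl -> approx G tl.
Proof. intros F G tl E H t x Hx. rewrite <- E; auto. Qed.

Lemma approx0_d : forall d tl, approx (fun _ _ => 0) tl -> approx (fun _ _ => 0) (map (dpush d) tl).
Proof.
  intros [|k] tl H.
  - apply (approx_ext (dt (fun _ _ => 0))).
    { intros t x _. apply (pd_zero 0). }
    apply approx_dt; auto. intros; apply (ex_pd_zero 0).
  - apply (approx_ext (pd (S k) (fun _ _ => 0))).
    { intros t x _. apply pd_zero. }
    apply approx_dS; auto.
Qed.

Lemma approx0_int : forall tl, noint tl -> approx (fun _ _ => 0) tl ->
  approx (fun _ _ => 0) (intify tl).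
Proof.
  intros tl Hn H t x [Ht Hx].
  assert (Hmin : Rmin 0 t = 0) by (apply Rmin_left; lra).
  assert (Hmax : Rmax 0 t = t) by (apply Rmax_right; lra).
  rewrite <- RInt_val; auto.
  2:{ intros r Hr. rewrite Hmin, Hmax in Hr. apply HUcov; auto; lra. }
  rewrite (RInt_ext _ (fun _ => 0)).
  - rewrite RInt_const. unfold scal; simpl; unfold mult; simpl; ring.
  - intros z Hz. rewrite Hmin, Hmax in Hz. symmetry. apply H. split; auto; lra.
Qed.

Lemma Hsym : forall p q t x, V t x -> bs 0 p q t x = bs 0 q p t x.
Proof.
  intros p q t x [Ht Hx]. unfold bs. simpl. apply HgS; auto; lia.
Qed.

Lemma sym_iter : forall l p q t x, V t x -> iter_pd l (bs 0 p q) t x = iter_pd l (bs 0 q p) t x.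
Proof.
  induction l as [|d l IH]; intros p q t x Hx.
  - simpl. apply Hsym; auto.
  - simpl. destruct d as [|k].
    + apply pd_loc_0; auto; apply (sm_ex U); auto; try apply (sm_iter U); auto; apply V_U; auto.
    + apply pd_loc_S; auto.
Qed.

Lemma at0_canon : forall b l p q t x, V t x ->
  at0 b l p q t x = at0 b (isort l) (if Nat.eqb b 0 then Nat.min p q else p)
                              (if Nat.eqb b 0 then Nat.max p q else q) t x.
Proof.
  intros b l p q t x Hx. unfold at0.
  rewrite (perm_iter U HU (bs b p q) l (isort l)); auto.
  2: apply perm_isort. 2: apply V_U; auto.
  destruct (Nat.eqb_spec b 0) as [E|E]; auto. subst b.
  destruct (Nat.le_ge_cases p q).
  - rewrite Nat.min_l, Nat.max_r; auto.
  - rewrite Nat.min_r, Nat.max_l; auto. apply sym_iter; auto.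
Qed.

Lemma tval_canon : forall tm t x, V t x -> tval tm t x = tval (tcanon tm) t x.
Proof.
  intros [c [|] b l p q] t x Hx; simpl; f_equal.
  - unfold ati. destruct Hx as [Ht Hx].
    apply RInt_ext. intros z Hz.
    rewrite Rmin_left in Hz by lra. rewrite Rmax_right in Hz by lra.
    apply (at0_canon b l p q z x). split; auto; lra.
  - apply at0_canon; auto.
Qed.

Lemma val_canon : forall tl t x, V t x -> val tl t x = val (map tcanon tl) t x.
Proof.
  induction tl as [|tm r IH]; intros t x Hx; simpl; auto.
  rewrite IH, tval_canon; auto.
Qed.


Definition tsum3 (f : nat -> list term) : list term := f 0%nat ++ f 1%nat ++ f 2%nat.

Lemma val_app : forall l1 l2 t x, val (l1 ++ l2) t x = val l1 t x + val l2 t x.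
Proof. induction l1 as [|a r IH]; intros; cbn [val app]; [ring|]. rewrite IH; ring. Qed.
Lemma val_scale : forall k l t x, val (tscale k l) t x = k * val l t x.
Proof.
  intros k l t x; induction l as [|[c i b ll p q] r IH]; cbn [val tscale map tval]; [ring|].
  unfold tscale in IH. rewrite IH. ring.
Qed.
Lemma val_tsum3 : forall f t x, val (tsum3 f) t x = sum3 (fun k => val (f k) t x).
Proof. intros; unfold tsum3, sum3; rewrite !val_app; ring. Qed.
Lemma sum3_ext : forall f g, (forall k, (k < 3)%nat -> f k = g k) -> sum3 f = sum3 g.
Proof. intros f g H; unfold sum3; rewrite !H by lia; reflexivity. Qed.
Lemma noint_tsum3 : forall f, (forall k, noint (f k)) -> noint (tsum3 f).
Proof. intros; unfold tsum3; repeat apply noint_app; auto. Qed.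

Lemma approx_plus : forall F G l1 l2, approx F l1 -> approx G l2 ->
  approx (fun t x => F t x + G t x) (l1 ++ l2).
Proof. intros F G l1 l2 H1 H2 t x Hx; rewrite val_app, H1, H2; auto. Qed.
Lemma approx_scale : forall k F l, approx F l -> approx (fun t x => k * F t x) (tscale k l).
Proof. intros k F l H t x Hx; rewrite val_scale, H; auto. Qed.

Definition approxM (M : mfield) (TM : nat -> nat -> list term) : Prop :=
  forall i j, (i < 3)%nat -> (j < 3)%nat -> approx (fun t x => M t x i j) (TM i j).
Definition approxVv (v : vfield) (TV : nat -> list term) : Prop :=
  forall i, (i < 3)%nat -> approx (fun t x => v t x i) (TV i).

Definition tS (TM : nat -> nat -> list term) i j :=
  TM j i ++ tscale (- kron i j) (tsum3 (fun k => TM k k)).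
Definition ttrans (TM : nat -> nat -> list term) i j := TM j i.
Definition tsym (TM : nat -> nat -> list term) i j := tscale (/2) (TM i j ++ TM j i).
Definition tcurl (TM : nat -> nat -> list term) i j :=
  tsum3 (fun k => tsum3 (fun l => tscale (eps i k l) (map (dpush (S k)) (TM l j)))).
Definition tdiv (TM : nat -> nat -> list term) i := tsum3 (fun j => map (dpush (S j)) (TM j i)).
Definition tdivv (TV : nat -> list term) := tsum3 (fun i => map (dpush (S i)) (TV i)).
Definition tgrad (TV : nat -> list term) i j := map (dpush (S i)) (TV j).
Definition tdef (TV : nat -> list term) := tsym (tgrad TV).
Definition thess (tl : list term) i j := map (dpush (S i)) (map (dpush (S j)) tl).
Definition ttr (TM : nat -> nat -> list term) := tsum3 (fun i => TM i i).
Definition tvskw (TM : nat -> nat -> list term) i :=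
  tscale (- / 2) (tsum3 (fun j => tsum3 (fun k => tscale (eps i j k) (TM j k)))).
Definition tadd (TM TN : nat -> nat -> list term) i j := TM i j ++ TN i j.
Definition tscM (c : R) (TM : nat -> nat -> list term) i j := tscale c (TM i j).
Definition tdtM (TM : nat -> nat -> list term) i j := map (dpush 0) (TM i j).
Definition tdtV (TV : nat -> list term) i := map (dpush 0) (TV i).
Definition tbase (b p q : nat) : list term := [Tm 1 false b [] p q].

Lemma approxM_S : forall M TM, approxM M TM -> approxM (Sf M) (tS TM).
Proof.
  intros M TM H i j Hi Hj t x Hx. unfold Sf, Sop, tS, tr.
  rewrite val_app, val_scale, val_tsum3. rewrite (H j i); auto.
  rewrite (sum3_ext (fun i0 => M t x i0 i0) (fun k => val (TM k k) t x)).
  - ring.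
  - intros k Hk; apply H; auto.
Qed.
Lemma approxM_trans : forall M TM, approxM M TM -> approxM (transf M) (ttrans TM).
Proof. intros M TM H i j Hi Hj t x Hx. unfold transf, trans, ttrans. apply H; auto. Qed.
Lemma approxM_sym : forall M TM, approxM M TM -> approxM (symf M) (tsym TM).
Proof.
  intros M TM H i j Hi Hj t x Hx. unfold symf, sym, tsym.
  rewrite val_scale, val_app, (H i j), (H j i); auto. unfold Rdiv; ring.
Qed.
Lemma approxM_curl : forall M TM, approxM M TM -> approxM (curl M) (tcurl TM).
Proof.
  intros M TM H i j Hi Hj t x Hx. unfold curl, tcurl. rewrite val_tsum3.
  apply sum3_ext; intros k Hk. rewrite val_tsum3. apply sum3_ext; intros l Hl.
  rewrite val_scale. f_equal. apply (approx_dx k); auto; try (apply H; auto).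
Qed.
Lemma approxV_div : forall M TM, approxM M TM -> approxVv (div M) (tdiv TM).
Proof.
  intros M TM H i Hi t x Hx. unfold div, tdiv. rewrite val_tsum3.
  apply sum3_ext; intros j Hj. apply (approx_dx j); auto; try (apply H; auto).
Qed.
Lemma approx_divv : forall v TV, approxVv v TV -> approx (divv v) (tdivv TV).
Proof.
  intros v TV H t x Hx. unfold divv, tdivv. rewrite val_tsum3.
  apply sum3_ext; intros j Hj. apply (approx_dx j); auto; try (apply H; auto).
Qed.
Lemma approxM_grad : forall v TV, approxVv v TV -> approxM (grad v) (tgrad TV).
Proof.
  intros v TV H i j Hi Hj t x Hx. unfold grad, tgrad. apply (approx_dx i); auto; try (apply H; auto).
Qed.
Lemma approxM_def : forall v TV, approxVv v TV -> approxM (def v) (tdef TV).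
Proof. intros; apply approxM_sym; apply approxM_grad; auto. Qed.
Lemma approxM_hess : forall u tl, approx u tl -> approxM (hess u) (thess tl).
Proof.
  intros u tl H i j Hi Hj t x Hx. unfold hess, thess. apply (approx_dx i); auto.
  apply (approx_dx j); auto.
Qed.
Lemma approx_tr : forall M TM, approxM M TM -> approx (trf M) (ttr TM).
Proof.
  intros M TM H t x Hx. unfold trf, tr, ttr. rewrite val_tsum3.
  apply sum3_ext; intros k Hk. apply H; auto.
Qed.
Lemma approxV_vskw : forall M TM, approxM M TM ->
  forall i, (i < 3)%nat -> approx (fun t x => vskw (M t x) i) (tvskw TM i).
Proof.
  intros M TM H i Hi t x Hx. unfold vskw, tvskw. rewrite val_scale, val_tsum3. f_equal.
  apply sum3_ext; intros j Hj. rewrite val_tsum3. apply sum3_ext; intros k Hk.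
  rewrite val_scale. f_equal. apply H; auto.
Qed.
Lemma approxM_add : forall M N TM TN, approxM M TM -> approxM N TN ->
  approxM (maddf M N) (tadd TM TN).
Proof. intros M N TM TN H1 H2 i j Hi Hj. apply approx_plus; auto. Qed.
Lemma approxM_scM : forall c M TM, approxM M TM -> approxM (mscalef c M) (tscM c TM).
Proof. intros c M TM H i j Hi Hj. apply approx_scale; auto. Qed.
Lemma approxM_dtM : forall M TM, approxM M TM ->
  (forall i j t x, (i < 3)%nat -> (j < 3)%nat -> V t x -> ex_pd 0 (fun t x => M t x i j) t x) ->
  approxM (dtM M) (tdtM TM).
Proof.
  intros M TM H HE i j Hi Hj. unfold dtM, tdtM. apply approx_dt; auto.
Qed.

Lemma val_base : forall b p q t x, (p < 3)%nat -> (q < 3)%nat ->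
  val (tbase b p q) t x = (if Nat.eqb b 0 then gamma else A) t x p q.
Proof.
  intros b p q t x Hp Hq. unfold tbase. cbn [val tval]. unfold at0, iter_pd. cbn [fold_right].
  unfold bs. rewrite !Nat.min_l by lia. ring.
Qed.
Lemma approxM_g : approxM gamma (tbase 0).
Proof. intros i j Hi Hj t x Hx. rewrite val_base; auto. Qed.
Lemma approxM_A : approxM A (tbase 1).
Proof. intros i j Hi Hj t x Hx. rewrite val_base; auto. Qed.

Lemma smooth_g : forall i j, (i < 3)%nat -> (j < 3)%nat -> smooth_on U (fun t x => gamma t x i j).
Proof. intros; apply Hgsm; auto. Qed.
Lemma smooth_A : forall i j, (i < 3)%nat -> (j < 3)%nat -> smooth_on U (fun t x => A t x i j).
Proof. intros; apply HAsm; auto. Qed.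

Lemma approxM_dg : approxM (dtM gamma) (tdtM (tbase 0)).
Proof.
  apply approxM_dtM. apply approxM_g.
  intros; apply (sm_ex U); [apply smooth_g; auto | apply V_U; auto].
Qed.
Lemma approxM_dA : approxM (dtM A) (tdtM (tbase 1)).
Proof.
  apply approxM_dtM. apply approxM_A.
  intros; apply (sm_ex U); [apply smooth_A; auto | apply V_U; auto].
Qed.
Lemma approxM_ddg : approxM (dtM (dtM gamma)) (tdtM (tdtM (tbase 0))).
Proof.
  apply approxM_dtM. apply approxM_dg.
  intros; apply (sm_ex U); [apply (sm_pd U (fun t x => gamma t x i j) 0); apply smooth_g; auto
                           | apply V_U; auto].
Qed.

Lemma noint_base : forall b p q, noint (tbase b p q).
Proof. reflexivity. Qed.
Lemma noint_tS : forall TM, (forall i j, noint (TM i j)) -> forall i j, noint (tS TM i j).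
Proof. intros; unfold tS; apply noint_app; auto. apply noint_scale, noint_tsum3; auto. Qed.
Lemma noint_tcurl : forall TM, (forall i j, noint (TM i j)) -> forall i j, noint (tcurl TM i j).
Proof. intros; unfold tcurl; apply noint_tsum3; intro; apply noint_tsum3; intro;
  apply noint_scale, noint_push; auto. Qed.
Lemma noint_tdiv : forall TM, (forall i j, noint (TM i j)) -> forall i, noint (tdiv TM i).
Proof. intros; unfold tdiv; apply noint_tsum3; intro; apply noint_push; auto. Qed.
Lemma noint_tvskw : forall TM, (forall i j, noint (TM i j)) -> forall i, noint (tvskw TM i).
Proof. intros; unfold tvskw; apply noint_scale, noint_tsum3; intro; apply noint_tsum3; intro;
  apply noint_scale; auto. Qed.
Lemma noint_tdtM : forall TM, (forall i j, noint (TM i j)) -> forall i j, noint (tdtM TM i j).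
Proof. intros; unfold tdtM; apply noint_push; auto. Qed.

Definition LdivSg (i : nat) : list term := tdiv (tS (tbase 0)) i.
Definition tbeta (i : nat) : list term :=
  tscale (/2) (intify (LdivSg i)) ++ tvskw (tbase 1) i
  ++ tscale (-1) (intify (map (dpush 0) (tvskw (tbase 1) i))).
Definition beta_f : vfield := fun t x i =>
  / 2 * RInt (fun s => div (Sf gamma) s x i) 0 t + vskw (A0 x) i.
Definition alpha_f : sfield := fun t x => / 2 * trf gamma t x.

Lemma noint_LdivSg : forall i, noint (LdivSg i).
Proof. intro; apply noint_tdiv, noint_tS, noint_base. Qed.
Lemma noint_vA : forall i, noint (tvskw (tbase 1) i).
Proof. intro; apply noint_tvskw, noint_base. Qed.

Lemma Sg_val_all : forall t x i j, (i < 3)%nat -> (j < 3)%nat ->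
  Sf gamma t x i j = val (tS (tbase 0) i j) t x.
Proof.
  intros t x i j Hi Hj. unfold Sf, Sop, tS, tr.
  rewrite val_app, val_scale, val_tsum3, val_base; auto.
  rewrite (sum3_ext (fun i0 => gamma t x i0 i0) (fun k => val (tbase 0 k k) t x)).
  - simpl; ring.
  - intros k Hk; rewrite val_base; auto.
Qed.

Lemma divSg_U : forall s x i, (i < 3)%nat -> U s x -> div (Sf gamma) s x i = val (LdivSg i) s x.
Proof.
  intros s x i Hi Hs. unfold div, LdivSg, tdiv. rewrite val_tsum3.
  apply sum3_ext; intros j Hj.
  replace (fun t' x' => Sf gamma t' x' j i) with (val (tS (tbase 0) j i)).
  2:{ apply functional_extensionality; intro t'; apply functional_extensionality; intro x'.
      symmetry; apply Sg_val_all; auto. }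
  change (pd (S j) (val (tS (tbase 0) j i)) s x = val (map (dpush (S j)) (tS (tbase 0) j i)) s x).
  apply LIN_U; auto. apply noint_tS; intros; apply noint_base.
Qed.

Lemma FTC_val : forall tl t x, noint tl -> V t x ->
  val tl t x - val tl 0 x = val (intify (map (dpush 0) tl)) t x.
Proof.
  intros tl t x Hn [Ht Hx].
  assert (Hmin : Rmin 0 t = 0) by (apply Rmin_left; lra).
  assert (Hmax : Rmax 0 t = t) by (apply Rmax_right; lra).
  rewrite <- RInt_val; auto.
  2: apply noint_push; auto.
  2:{ intros r Hr; rewrite Hmin, Hmax in Hr; apply HUcov; auto; lra. }
  symmetry; apply is_RInt_unique.
  apply (is_RInt_derive (fun s => val tl s x) (fun s => val (map (dpush 0) tl) s x)).
  - intros s Hs. rewrite Hmin, Hmax in Hs.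
    assert (HUs : U s x) by (apply HUcov; auto; lra).
    destruct (LIN_U tl 0 s x Hn HUs) as [E1 E2].
    change (Derive (fun r => val tl r x) s = val (map (dpush 0) tl) s x) in E2.
    rewrite <- E2. apply Derive_correct. exact E1.
  - intros s Hs. rewrite Hmin, Hmax in Hs. apply cont_val_time.
    apply noint_push; auto. apply HUcov; auto; lra.
Qed.

Lemma beta_approx : approxVv beta_f tbeta.
Proof.
  intros i Hi t x Hx. unfold beta_f, tbeta.
  rewrite !val_app, !val_scale.
  destruct Hx as [Ht Hx'].
  assert (Hmin : Rmin 0 t = 0) by (apply Rmin_left; lra).
  assert (Hmax : Rmax 0 t = t) by (apply Rmax_right; lra).
  rewrite <- RInt_val; [| apply noint_LdivSg |].
  2:{ intros r Hr; rewrite Hmin, Hmax in Hr; apply HUcov; auto; lra. }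
  rewrite (RInt_ext (fun s => div (Sf gamma) s x i) (fun r => val (LdivSg i) r x)).
  2:{ intros z Hz; rewrite Hmin, Hmax in Hz. apply divSg_U; auto. apply HUcov; auto; lra. }
  rewrite <- FTC_val; [| apply noint_vA | split; auto].
  rewrite <- (HA0 x Hx').
  rewrite (approxV_vskw A (tbase 1) approxM_A i Hi 0 x).
  2:{ split; auto; lra. }
  ring.
Qed.

Lemma beta_ex0 : forall i t x, (i < 3)%nat -> V t x -> ex_pd 0 (fun t x => beta_f t x i) t x.
Proof.
  intros i t x Hi Hx.
  change (ex_derive (fun s => beta_f s x i) t).
  apply (ex_derive_ext_loc (fun s => / 2 * val (intify (LdivSg i)) s x + vskw (A0 x) i)).
  - eapply filter_imp; [|apply (seg t x Hx)]. intros s Hs. unfold beta_f. f_equal. f_equal.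
    rewrite <- RInt_val; auto; [|apply noint_LdivSg].
    apply RInt_ext. intros z Hz. symmetry. apply divSg_U; auto. apply Hs; lra.
  - apply (ex_derive_plus (fun s => / 2 * val (intify (LdivSg i)) s x) (fun _ => vskw (A0 x) i)).
    + apply ex_derive_scal. apply (LIN_V (intify (LdivSg i)) 0 t x Hx).
    + apply ex_derive_const.
Qed.

Lemma dtbeta_approx : approxVv (dtV beta_f) (tdtV tbeta).
Proof.
  intros i Hi. unfold dtV, tdtV. apply approx_dt.
  - apply beta_approx; auto.
  - intros; apply beta_ex0; auto.
Qed.

Lemma HL_evo2 : forall p q, (p < 3)%nat -> (q < 3)%nat ->
  approx (fun _ _ => 0) (tS (tdtM (tbase 0)) p q ++ tscale (-1) (tsym (tcurl (tbase 1)) p q)).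
Proof.
  intros p q Hp Hq.
  eapply approx_ext; [|apply approx_plus; [apply (approxM_S _ _ approxM_dg p q Hp Hq)|
     apply approx_scale; apply (approxM_sym _ _ (approxM_curl _ _ approxM_A) p q Hp Hq)]].
  intros t x [Ht Hx]. cbv beta. rewrite <- (Hevo2 t x p q Ht Hx Hp Hq). ring.
Qed.
Lemma HL_evo1 : forall p q, (p < 3)%nat -> (q < 3)%nat ->
  approx (fun _ _ => 0) (tdtM (tbase 1) p q ++ tcurl (tS (tbase 0)) p q).
Proof.
  intros p q Hp Hq.
  eapply approx_ext; [|apply approx_plus; [apply (approxM_dA p q Hp Hq)|
     apply (approxM_curl _ _ (approxM_S _ _ approxM_g) p q Hp Hq)]].
  intros t x [Ht Hx]. cbv beta. rewrite <- (Hevo1 t x p q Ht Hx Hp Hq). ring.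
Qed.
Lemma HL_cons : approx (fun _ _ => 0) (tdivv (tdiv (tS (tbase 0)))).
Proof.
  eapply approx_ext; [|apply approx_divv, approxV_div, approxM_S, approxM_g].
  intros t x [Ht Hx]. apply Hcons; auto.
Qed.
Lemma HL_tr : approx (fun _ _ => 0) (ttr (tbase 1)).
Proof.
  eapply approx_ext; [|apply approx_tr, approxM_A].
  intros t x [Ht Hx]. apply HAT; auto.
Qed.
Lemma HL_div : forall l, (l < 3)%nat -> approx (fun _ _ => 0) (tdiv (tbase 1) l).
Proof.
  intros l Hl.
  eapply approx_ext; [|apply (approxV_div _ _ approxM_A l Hl)].
  intros t x [Ht Hx]. apply Hdiv; auto.
Qed.

Definition at0c := at0.
Definition atic := ati.
Lemma at0_to_c : forall b l p q t x, V t x ->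
  at0 b l p q t x = at0c b (isort l) (if Nat.eqb b 0 then Nat.min p q else p)
                             (if Nat.eqb b 0 then Nat.max p q else q) t x.
Proof. intros; apply at0_canon; auto. Qed.
Lemma ati_to_c : forall b l p q t x, V t x ->
  ati b l p q t x = atic b (isort l) (if Nat.eqb b 0 then Nat.min p q else p)
                             (if Nat.eqb b 0 then Nat.max p q else q) t x.
Proof.
  intros b l p q t x [Ht Hx]. unfold atic, ati.
  apply RInt_ext. intros z Hz.
  rewrite Rmin_left in Hz by lra. rewrite Rmax_right in Hz by lra.
  apply (at0_canon b l p q z x). split; auto; lra.
Qed.


Lemma comb4 : forall L1 L2 L3 L4 t x,
  val (L1 ++ L2 ++ tscale (-2) L3 ++ tscale (-2) L4) t x = 0 ->
  val L1 t x + val L2 t x - 2 * val L3 t x - 2 * val L4 t x = 0.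
Proof. intros. rewrite !val_app, !val_scale in H. lra. Qed.

Ltac expand_val :=
  cbn [val tval map app tsum3 tS ttrans tsym tcurl tdiv tdivv tgrad tdef thess ttr tvskw
       tadd tscM tdtM tdtV tbase tscale intify dpush tbeta LdivSg kron eps Nat.eqb andb negb
       tcanon isort insert Nat.leb Nat.min Nat.max].
Ltac expand_val_in H :=
  cbn [val tval map app tsum3 tS ttrans tsym tcurl tdiv tdivv tgrad tdef thess ttr tvskw
       tadd tscM tdtM tdtV tbase tscale intify dpush tbeta LdivSg kron eps Nat.eqb andb negb
       tcanon isort insert Nat.leb Nat.min Nat.max] in H.


Lemma noint_evo1 : forall p q, noint (tdtM (tbase 1) p q ++ tcurl (tS (tbase 0)) p q).
Proof.
  intros; apply noint_app. apply noint_tdtM; intros; apply noint_base.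
  apply noint_tcurl, noint_tS; intros; apply noint_base.
Qed.

Ltac fin1 t x Hx :=
  pose proof (HL_cons t x Hx) as Hc; rewrite (val_canon _ t x Hx) in Hc; expand_val_in Hc;
  pose proof (approx0_d 0 _ (HL_evo2 0 0 ltac:(lia) ltac:(lia)) t x Hx) as Ha00; rewrite (val_canon _ t x Hx) in Ha00; expand_val_in Ha00;
  pose proof (approx0_d 1 _ (HL_evo1 0 0 ltac:(lia) ltac:(lia)) t x Hx) as Hb000; rewrite (val_canon _ t x Hx) in Hb000; expand_val_in Hb000;
  pose proof (approx0_d 2 _ (HL_evo1 0 0 ltac:(lia) ltac:(lia)) t x Hx) as Hb100; rewrite (val_canon _ t x Hx) in Hb100; expand_val_in Hb100;
  pose proof (approx0_d 3 _ (HL_evo1 0 0 ltac:(lia) ltac:(lia)) t x Hx) as Hb200; rewrite (val_canon _ t x Hx) in Hb200; expand_val_in Hb200;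
  pose proof (approx0_d 0 _ (HL_evo2 0 1 ltac:(lia) ltac:(lia)) t x Hx) as Ha01; rewrite (val_canon _ t x Hx) in Ha01; expand_val_in Ha01;
  pose proof (approx0_d 1 _ (HL_evo1 0 1 ltac:(lia) ltac:(lia)) t x Hx) as Hb001; rewrite (val_canon _ t x Hx) in Hb001; expand_val_in Hb001;
  pose proof (approx0_d 2 _ (HL_evo1 0 1 ltac:(lia) ltac:(lia)) t x Hx) as Hb101; rewrite (val_canon _ t x Hx) in Hb101; expand_val_in Hb101;
  pose proof (approx0_d 3 _ (HL_evo1 0 1 ltac:(lia) ltac:(lia)) t x Hx) as Hb201; rewrite (val_canon _ t x Hx) in Hb201; expand_val_in Hb201;
  pose proof (approx0_d 0 _ (HL_evo2 0 2 ltac:(lia) ltac:(lia)) t x Hx) as Ha02; rewrite (val_canon _ t x Hx) in Ha02; expand_val_in Ha02;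
  pose proof (approx0_d 1 _ (HL_evo1 0 2 ltac:(lia) ltac:(lia)) t x Hx) as Hb002; rewrite (val_canon _ t x Hx) in Hb002; expand_val_in Hb002;
  pose proof (approx0_d 2 _ (HL_evo1 0 2 ltac:(lia) ltac:(lia)) t x Hx) as Hb102; rewrite (val_canon _ t x Hx) in Hb102; expand_val_in Hb102;
  pose proof (approx0_d 3 _ (HL_evo1 0 2 ltac:(lia) ltac:(lia)) t x Hx) as Hb202; rewrite (val_canon _ t x Hx) in Hb202; expand_val_in Hb202;
  pose proof (approx0_d 0 _ (HL_evo2 1 0 ltac:(lia) ltac:(lia)) t x Hx) as Ha10; rewrite (val_canon _ t x Hx) in Ha10; expand_val_in Ha10;
  pose proof (approx0_d 1 _ (HL_evo1 1 0 ltac:(lia) ltac:(lia)) t x Hx) as Hb010; rewrite (val_canon _ t x Hx) in Hb010; expand_val_in Hb010;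
  pose proof (approx0_d 2 _ (HL_evo1 1 0 ltac:(lia) ltac:(lia)) t x Hx) as Hb110; rewrite (val_canon _ t x Hx) in Hb110; expand_val_in Hb110;
  pose proof (approx0_d 3 _ (HL_evo1 1 0 ltac:(lia) ltac:(lia)) t x Hx) as Hb210; rewrite (val_canon _ t x Hx) in Hb210; expand_val_in Hb210;
  pose proof (approx0_d 0 _ (HL_evo2 1 1 ltac:(lia) ltac:(lia)) t x Hx) as Ha11; rewrite (val_canon _ t x Hx) in Ha11; expand_val_in Ha11;
  pose proof (approx0_d 1 _ (HL_evo1 1 1 ltac:(lia) ltac:(lia)) t x Hx) as Hb011; rewrite (val_canon _ t x Hx) in Hb011; expand_val_in Hb011;
  pose proof (approx0_d 2 _ (HL_evo1 1 1 ltac:(lia) ltac:(lia)) t x Hx) as Hb111; rewrite (val_canon _ t x Hx) in Hb111; expand_val_in Hb111;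
  pose proof (approx0_d 3 _ (HL_evo1 1 1 ltac:(lia) ltac:(lia)) t x Hx) as Hb211; rewrite (val_canon _ t x Hx) in Hb211; expand_val_in Hb211;
  pose proof (approx0_d 0 _ (HL_evo2 1 2 ltac:(lia) ltac:(lia)) t x Hx) as Ha12; rewrite (val_canon _ t x Hx) in Ha12; expand_val_in Ha12;
  pose proof (approx0_d 1 _ (HL_evo1 1 2 ltac:(lia) ltac:(lia)) t x Hx) as Hb012; rewrite (val_canon _ t x Hx) in Hb012; expand_val_in Hb012;
  pose proof (approx0_d 2 _ (HL_evo1 1 2 ltac:(lia) ltac:(lia)) t x Hx) as Hb112; rewrite (val_canon _ t x Hx) in Hb112; expand_val_in Hb112;
  pose proof (approx0_d 3 _ (HL_evo1 1 2 ltac:(lia) ltac:(lia)) t x Hx) as Hb212; rewrite (val_canon _ t x Hx) in Hb212; expand_val_in Hb212;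
  pose proof (approx0_d 0 _ (HL_evo2 2 0 ltac:(lia) ltac:(lia)) t x Hx) as Ha20; rewrite (val_canon _ t x Hx) in Ha20; expand_val_in Ha20;
  pose proof (approx0_d 1 _ (HL_evo1 2 0 ltac:(lia) ltac:(lia)) t x Hx) as Hb020; rewrite (val_canon _ t x Hx) in Hb020; expand_val_in Hb020;
  pose proof (approx0_d 2 _ (HL_evo1 2 0 ltac:(lia) ltac:(lia)) t x Hx) as Hb120; rewrite (val_canon _ t x Hx) in Hb120; expand_val_in Hb120;
  pose proof (approx0_d 3 _ (HL_evo1 2 0 ltac:(lia) ltac:(lia)) t x Hx) as Hb220; rewrite (val_canon _ t x Hx) in Hb220; expand_val_in Hb220;
  pose proof (approx0_d 0 _ (HL_evo2 2 1 ltac:(lia) ltac:(lia)) t x Hx) as Ha21; rewrite (val_canon _ t x Hx) in Ha21; expand_val_in Ha21;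
  pose proof (approx0_d 1 _ (HL_evo1 2 1 ltac:(lia) ltac:(lia)) t x Hx) as Hb021; rewrite (val_canon _ t x Hx) in Hb021; expand_val_in Hb021;
  pose proof (approx0_d 2 _ (HL_evo1 2 1 ltac:(lia) ltac:(lia)) t x Hx) as Hb121; rewrite (val_canon _ t x Hx) in Hb121; expand_val_in Hb121;
  pose proof (approx0_d 3 _ (HL_evo1 2 1 ltac:(lia) ltac:(lia)) t x Hx) as Hb221; rewrite (val_canon _ t x Hx) in Hb221; expand_val_in Hb221;
  pose proof (approx0_d 0 _ (HL_evo2 2 2 ltac:(lia) ltac:(lia)) t x Hx) as Ha22; rewrite (val_canon _ t x Hx) in Ha22; expand_val_in Ha22;
  pose proof (approx0_d 1 _ (HL_evo1 2 2 ltac:(lia) ltac:(lia)) t x Hx) as Hb022; rewrite (val_canon _ t x Hx) in Hb022; expand_val_in Hb022;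
  pose proof (approx0_d 2 _ (HL_evo1 2 2 ltac:(lia) ltac:(lia)) t x Hx) as Hb122; rewrite (val_canon _ t x Hx) in Hb122; expand_val_in Hb122;
  pose proof (approx0_d 3 _ (HL_evo1 2 2 ltac:(lia) ltac:(lia)) t x Hx) as Hb222; rewrite (val_canon _ t x Hx) in Hb222; expand_val_in Hb222;
  lra.

Ltac fin2 t x Hx :=
  pose proof (approx0_d 1 _ (HL_evo2 0 0 ltac:(lia) ltac:(lia)) t x Hx) as Ha000; rewrite (val_canon _ t x Hx) in Ha000; expand_val_in Ha000;
  pose proof (approx0_d 2 _ (HL_evo2 0 0 ltac:(lia) ltac:(lia)) t x Hx) as Ha100; rewrite (val_canon _ t x Hx) in Ha100; expand_val_in Ha100;
  pose proof (approx0_d 3 _ (HL_evo2 0 0 ltac:(lia) ltac:(lia)) t x Hx) as Ha200; rewrite (val_canon _ t x Hx) in Ha200; expand_val_in Ha200;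
  pose proof (approx0_d 1 _ (HL_evo2 0 1 ltac:(lia) ltac:(lia)) t x Hx) as Ha001; rewrite (val_canon _ t x Hx) in Ha001; expand_val_in Ha001;
  pose proof (approx0_d 2 _ (HL_evo2 0 1 ltac:(lia) ltac:(lia)) t x Hx) as Ha101; rewrite (val_canon _ t x Hx) in Ha101; expand_val_in Ha101;
  pose proof (approx0_d 3 _ (HL_evo2 0 1 ltac:(lia) ltac:(lia)) t x Hx) as Ha201; rewrite (val_canon _ t x Hx) in Ha201; expand_val_in Ha201;
  pose proof (approx0_d 1 _ (HL_evo2 0 2 ltac:(lia) ltac:(lia)) t x Hx) as Ha002; rewrite (val_canon _ t x Hx) in Ha002; expand_val_in Ha002;
  pose proof (approx0_d 2 _ (HL_evo2 0 2 ltac:(lia) ltac:(lia)) t x Hx) as Ha102; rewrite (val_canon _ t x Hx) in Ha102; expand_val_in Ha102;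
  pose proof (approx0_d 3 _ (HL_evo2 0 2 ltac:(lia) ltac:(lia)) t x Hx) as Ha202; rewrite (val_canon _ t x Hx) in Ha202; expand_val_in Ha202;
  pose proof (approx0_d 1 _ (HL_evo2 1 0 ltac:(lia) ltac:(lia)) t x Hx) as Ha010; rewrite (val_canon _ t x Hx) in Ha010; expand_val_in Ha010;
  pose proof (approx0_d 2 _ (HL_evo2 1 0 ltac:(lia) ltac:(lia)) t x Hx) as Ha110; rewrite (val_canon _ t x Hx) in Ha110; expand_val_in Ha110;
  pose proof (approx0_d 3 _ (HL_evo2 1 0 ltac:(lia) ltac:(lia)) t x Hx) as Ha210; rewrite (val_canon _ t x Hx) in Ha210; expand_val_in Ha210;
  pose proof (approx0_d 1 _ (HL_evo2 1 1 ltac:(lia) ltac:(lia)) t x Hx) as Ha011; rewrite (val_canon _ t x Hx) in Ha011; expand_val_in Ha011;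
  pose proof (approx0_d 2 _ (HL_evo2 1 1 ltac:(lia) ltac:(lia)) t x Hx) as Ha111; rewrite (val_canon _ t x Hx) in Ha111; expand_val_in Ha111;
  pose proof (approx0_d 3 _ (HL_evo2 1 1 ltac:(lia) ltac:(lia)) t x Hx) as Ha211; rewrite (val_canon _ t x Hx) in Ha211; expand_val_in Ha211;
  pose proof (approx0_d 1 _ (HL_evo2 1 2 ltac:(lia) ltac:(lia)) t x Hx) as Ha012; rewrite (val_canon _ t x Hx) in Ha012; expand_val_in Ha012;
  pose proof (approx0_d 2 _ (HL_evo2 1 2 ltac:(lia) ltac:(lia)) t x Hx) as Ha112; rewrite (val_canon _ t x Hx) in Ha112; expand_val_in Ha112;
  pose proof (approx0_d 3 _ (HL_evo2 1 2 ltac:(lia) ltac:(lia)) t x Hx) as Ha212; rewrite (val_canon _ t x Hx) in Ha212; expand_val_in Ha212;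
  pose proof (approx0_d 1 _ (HL_evo2 2 0 ltac:(lia) ltac:(lia)) t x Hx) as Ha020; rewrite (val_canon _ t x Hx) in Ha020; expand_val_in Ha020;
  pose proof (approx0_d 2 _ (HL_evo2 2 0 ltac:(lia) ltac:(lia)) t x Hx) as Ha120; rewrite (val_canon _ t x Hx) in Ha120; expand_val_in Ha120;
  pose proof (approx0_d 3 _ (HL_evo2 2 0 ltac:(lia) ltac:(lia)) t x Hx) as Ha220; rewrite (val_canon _ t x Hx) in Ha220; expand_val_in Ha220;
  pose proof (approx0_d 1 _ (HL_evo2 2 1 ltac:(lia) ltac:(lia)) t x Hx) as Ha021; rewrite (val_canon _ t x Hx) in Ha021; expand_val_in Ha021;
  pose proof (approx0_d 2 _ (HL_evo2 2 1 ltac:(lia) ltac:(lia)) t x Hx) as Ha121; rewrite (val_canon _ t x Hx) in Ha121; expand_val_in Ha121;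
  pose proof (approx0_d 3 _ (HL_evo2 2 1 ltac:(lia) ltac:(lia)) t x Hx) as Ha221; rewrite (val_canon _ t x Hx) in Ha221; expand_val_in Ha221;
  pose proof (approx0_d 1 _ (HL_evo2 2 2 ltac:(lia) ltac:(lia)) t x Hx) as Ha022; rewrite (val_canon _ t x Hx) in Ha022; expand_val_in Ha022;
  pose proof (approx0_d 2 _ (HL_evo2 2 2 ltac:(lia) ltac:(lia)) t x Hx) as Ha122; rewrite (val_canon _ t x Hx) in Ha122; expand_val_in Ha122;
  pose proof (approx0_d 3 _ (HL_evo2 2 2 ltac:(lia) ltac:(lia)) t x Hx) as Ha222; rewrite (val_canon _ t x Hx) in Ha222; expand_val_in Ha222;
  pose proof (approx0_d 1 _ (approx0_d 1 _ HL_tr) t x Hx) as Ht00; rewrite (val_canon _ t x Hx) in Ht00; expand_val_in Ht00;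
  pose proof (approx0_d 1 _ (approx0_d 2 _ HL_tr) t x Hx) as Ht01; rewrite (val_canon _ t x Hx) in Ht01; expand_val_in Ht01;
  pose proof (approx0_d 1 _ (approx0_d 3 _ HL_tr) t x Hx) as Ht02; rewrite (val_canon _ t x Hx) in Ht02; expand_val_in Ht02;
  pose proof (approx0_d 1 _ (HL_div 0 ltac:(lia)) t x Hx) as Hd00; rewrite (val_canon _ t x Hx) in Hd00; expand_val_in Hd00;
  pose proof (approx0_d 1 _ (HL_div 1 ltac:(lia)) t x Hx) as Hd01; rewrite (val_canon _ t x Hx) in Hd01; expand_val_in Hd01;
  pose proof (approx0_d 1 _ (HL_div 2 ltac:(lia)) t x Hx) as Hd02; rewrite (val_canon _ t x Hx) in Hd02; expand_val_in Hd02;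
  pose proof (approx0_d 2 _ (approx0_d 1 _ HL_tr) t x Hx) as Ht10; rewrite (val_canon _ t x Hx) in Ht10; expand_val_in Ht10;
  pose proof (approx0_d 2 _ (approx0_d 2 _ HL_tr) t x Hx) as Ht11; rewrite (val_canon _ t x Hx) in Ht11; expand_val_in Ht11;
  pose proof (approx0_d 2 _ (approx0_d 3 _ HL_tr) t x Hx) as Ht12; rewrite (val_canon _ t x Hx) in Ht12; expand_val_in Ht12;
  pose proof (approx0_d 2 _ (HL_div 0 ltac:(lia)) t x Hx) as Hd10; rewrite (val_canon _ t x Hx) in Hd10; expand_val_in Hd10;
  pose proof (approx0_d 2 _ (HL_div 1 ltac:(lia)) t x Hx) as Hd11; rewrite (val_canon _ t x Hx) in Hd11; expand_val_in Hd11;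
  pose proof (approx0_d 2 _ (HL_div 2 ltac:(lia)) t x Hx) as Hd12; rewrite (val_canon _ t x Hx) in Hd12; expand_val_in Hd12;
  pose proof (approx0_d 3 _ (approx0_d 1 _ HL_tr) t x Hx) as Ht20; rewrite (val_canon _ t x Hx) in Ht20; expand_val_in Ht20;
  pose proof (approx0_d 3 _ (approx0_d 2 _ HL_tr) t x Hx) as Ht21; rewrite (val_canon _ t x Hx) in Ht21; expand_val_in Ht21;
  pose proof (approx0_d 3 _ (approx0_d 3 _ HL_tr) t x Hx) as Ht22; rewrite (val_canon _ t x Hx) in Ht22; expand_val_in Ht22;
  pose proof (approx0_d 3 _ (HL_div 0 ltac:(lia)) t x Hx) as Hd20; rewrite (val_canon _ t x Hx) in Hd20; expand_val_in Hd20;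
  pose proof (approx0_d 3 _ (HL_div 1 ltac:(lia)) t x Hx) as Hd21; rewrite (val_canon _ t x Hx) in Hd21; expand_val_in Hd21;
  pose proof (approx0_d 3 _ (HL_div 2 ltac:(lia)) t x Hx) as Hd22; rewrite (val_canon _ t x Hx) in Hd22; expand_val_in Hd22;
  pose proof (approx0_int _ (noint_push _ _ (noint_push _ _ (noint_evo1 0 0))) (approx0_d 1 _ (approx0_d 1 _ (HL_evo1 0 0 ltac:(lia) ltac:(lia)))) t x Hx) as Hi0000; rewrite (val_canon _ t x Hx) in Hi0000; expand_val_in Hi0000;
  pose proof (approx0_int _ (noint_push _ _ (noint_push _ _ (noint_evo1 0 1))) (approx0_d 1 _ (approx0_d 1 _ (HL_evo1 0 1 ltac:(lia) ltac:(lia)))) t x Hx) as Hi0001; rewrite (val_canon _ t x Hx) in Hi0001; expand_val_in Hi0001;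
  pose proof (approx0_int _ (noint_push _ _ (noint_push _ _ (noint_evo1 0 2))) (approx0_d 1 _ (approx0_d 1 _ (HL_evo1 0 2 ltac:(lia) ltac:(lia)))) t x Hx) as Hi0002; rewrite (val_canon _ t x Hx) in Hi0002; expand_val_in Hi0002;
  pose proof (approx0_int _ (noint_push _ _ (noint_push _ _ (noint_evo1 1 0))) (approx0_d 1 _ (approx0_d 1 _ (HL_evo1 1 0 ltac:(lia) ltac:(lia)))) t x Hx) as Hi0010; rewrite (val_canon _ t x Hx) in Hi0010; expand_val_in Hi0010;
  pose proof (approx0_int _ (noint_push _ _ (noint_push _ _ (noint_evo1 1 1))) (approx0_d 1 _ (approx0_d 1 _ (HL_evo1 1 1 ltac:(lia) ltac:(lia)))) t x Hx) as Hi0011; rewrite (val_canon _ t x Hx) in Hi0011; expand_val_in Hi0011;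
  pose proof (approx0_int _ (noint_push _ _ (noint_push _ _ (noint_evo1 1 2))) (approx0_d 1 _ (approx0_d 1 _ (HL_evo1 1 2 ltac:(lia) ltac:(lia)))) t x Hx) as Hi0012; rewrite (val_canon _ t x Hx) in Hi0012; expand_val_in Hi0012;
  pose proof (approx0_int _ (noint_push _ _ (noint_push _ _ (noint_evo1 2 0))) (approx0_d 1 _ (approx0_d 1 _ (HL_evo1 2 0 ltac:(lia) ltac:(lia)))) t x Hx) as Hi0020; rewrite (val_canon _ t x Hx) in Hi0020; expand_val_in Hi0020;
  pose proof (approx0_int _ (noint_push _ _ (noint_push _ _ (noint_evo1 2 1))) (approx0_d 1 _ (approx0_d 1 _ (HL_evo1 2 1 ltac:(lia) ltac:(lia)))) t x Hx) as Hi0021; rewrite (val_canon _ t x Hx) in Hi0021; expand_val_in Hi0021;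
  pose proof (approx0_int _ (noint_push _ _ (noint_push _ _ (noint_evo1 2 2))) (approx0_d 1 _ (approx0_d 1 _ (HL_evo1 2 2 ltac:(lia) ltac:(lia)))) t x Hx) as Hi0022; rewrite (val_canon _ t x Hx) in Hi0022; expand_val_in Hi0022;
  pose proof (approx0_int _ (noint_push _ _ (noint_push _ _ (noint_evo1 0 0))) (approx0_d 1 _ (approx0_d 2 _ (HL_evo1 0 0 ltac:(lia) ltac:(lia)))) t x Hx) as Hi0100; rewrite (val_canon _ t x Hx) in Hi0100; expand_val_in Hi0100;
  pose proof (approx0_int _ (noint_push _ _ (noint_push _ _ (noint_evo1 0 1))) (approx0_d 1 _ (approx0_d 2 _ (HL_evo1 0 1 ltac:(lia) ltac:(lia)))) t x Hx) as Hi0101; rewrite (val_canon _ t x Hx) in Hi0101; expand_val_in Hi0101;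
  pose proof (approx0_int _ (noint_push _ _ (noint_push _ _ (noint_evo1 0 2))) (approx0_d 1 _ (approx0_d 2 _ (HL_evo1 0 2 ltac:(lia) ltac:(lia)))) t x Hx) as Hi0102; rewrite (val_canon _ t x Hx) in Hi0102; expand_val_in Hi0102;
  pose proof (approx0_int _ (noint_push _ _ (noint_push _ _ (noint_evo1 1 0))) (approx0_d 1 _ (approx0_d 2 _ (HL_evo1 1 0 ltac:(lia) ltac:(lia)))) t x Hx) as Hi0110; rewrite (val_canon _ t x Hx) in Hi0110; expand_val_in Hi0110;
  pose proof (approx0_int _ (noint_push _ _ (noint_push _ _ (noint_evo1 1 1))) (approx0_d 1 _ (approx0_d 2 _ (HL_evo1 1 1 ltac:(lia) ltac:(lia)))) t x Hx) as Hi0111; rewrite (val_canon _ t x Hx) in Hi0111; expand_val_in Hi0111;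
  pose proof (approx0_int _ (noint_push _ _ (noint_push _ _ (noint_evo1 1 2))) (approx0_d 1 _ (approx0_d 2 _ (HL_evo1 1 2 ltac:(lia) ltac:(lia)))) t x Hx) as Hi0112; rewrite (val_canon _ t x Hx) in Hi0112; expand_val_in Hi0112;
  pose proof (approx0_int _ (noint_push _ _ (noint_push _ _ (noint_evo1 2 0))) (approx0_d 1 _ (approx0_d 2 _ (HL_evo1 2 0 ltac:(lia) ltac:(lia)))) t x Hx) as Hi0120; rewrite (val_canon _ t x Hx) in Hi0120; expand_val_in Hi0120;
  pose proof (approx0_int _ (noint_push _ _ (noint_push _ _ (noint_evo1 2 1))) (approx0_d 1 _ (approx0_d 2 _ (HL_evo1 2 1 ltac:(lia) ltac:(lia)))) t x Hx) as Hi0121; rewrite (val_canon _ t x Hx) in Hi0121; expand_val_in Hi0121;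
  pose proof (approx0_int _ (noint_push _ _ (noint_push _ _ (noint_evo1 2 2))) (approx0_d 1 _ (approx0_d 2 _ (HL_evo1 2 2 ltac:(lia) ltac:(lia)))) t x Hx) as Hi0122; rewrite (val_canon _ t x Hx) in Hi0122; expand_val_in Hi0122;
  pose proof (approx0_int _ (noint_push _ _ (noint_push _ _ (noint_evo1 0 0))) (approx0_d 1 _ (approx0_d 3 _ (HL_evo1 0 0 ltac:(lia) ltac:(lia)))) t x Hx) as Hi0200; rewrite (val_canon _ t x Hx) in Hi0200; expand_val_in Hi0200;
  pose proof (approx0_int _ (noint_push _ _ (noint_push _ _ (noint_evo1 0 1))) (approx0_d 1 _ (approx0_d 3 _ (HL_evo1 0 1 ltac:(lia) ltac:(lia)))) t x Hx) as Hi0201; rewrite (val_canon _ t x Hx) in Hi0201; expand_val_in Hi0201;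
  pose proof (approx0_int _ (noint_push _ _ (noint_push _ _ (noint_evo1 0 2))) (approx0_d 1 _ (approx0_d 3 _ (HL_evo1 0 2 ltac:(lia) ltac:(lia)))) t x Hx) as Hi0202; rewrite (val_canon _ t x Hx) in Hi0202; expand_val_in Hi0202;
  pose proof (approx0_int _ (noint_push _ _ (noint_push _ _ (noint_evo1 1 0))) (approx0_d 1 _ (approx0_d 3 _ (HL_evo1 1 0 ltac:(lia) ltac:(lia)))) t x Hx) as Hi0210; rewrite (val_canon _ t x Hx) in Hi0210; expand_val_in Hi0210;
  pose proof (approx0_int _ (noint_push _ _ (noint_push _ _ (noint_evo1 1 1))) (approx0_d 1 _ (approx0_d 3 _ (HL_evo1 1 1 ltac:(lia) ltac:(lia)))) t x Hx) as Hi0211; rewrite (val_canon _ t x Hx) in Hi0211; expand_val_in Hi0211;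
  pose proof (approx0_int _ (noint_push _ _ (noint_push _ _ (noint_evo1 1 2))) (approx0_d 1 _ (approx0_d 3 _ (HL_evo1 1 2 ltac:(lia) ltac:(lia)))) t x Hx) as Hi0212; rewrite (val_canon _ t x Hx) in Hi0212; expand_val_in Hi0212;
  pose proof (approx0_int _ (noint_push _ _ (noint_push _ _ (noint_evo1 2 0))) (approx0_d 1 _ (approx0_d 3 _ (HL_evo1 2 0 ltac:(lia) ltac:(lia)))) t x Hx) as Hi0220; rewrite (val_canon _ t x Hx) in Hi0220; expand_val_in Hi0220;
  pose proof (approx0_int _ (noint_push _ _ (noint_push _ _ (noint_evo1 2 1))) (approx0_d 1 _ (approx0_d 3 _ (HL_evo1 2 1 ltac:(lia) ltac:(lia)))) t x Hx) as Hi0221; rewrite (val_canon _ t x Hx) in Hi0221; expand_val_in Hi0221;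
  pose proof (approx0_int _ (noint_push _ _ (noint_push _ _ (noint_evo1 2 2))) (approx0_d 1 _ (approx0_d 3 _ (HL_evo1 2 2 ltac:(lia) ltac:(lia)))) t x Hx) as Hi0222; rewrite (val_canon _ t x Hx) in Hi0222; expand_val_in Hi0222;
  pose proof (approx0_int _ (noint_push _ _ (noint_push _ _ (noint_evo1 0 0))) (approx0_d 2 _ (approx0_d 2 _ (HL_evo1 0 0 ltac:(lia) ltac:(lia)))) t x Hx) as Hi1100; rewrite (val_canon _ t x Hx) in Hi1100; expand_val_in Hi1100;
  pose proof (approx0_int _ (noint_push _ _ (noint_push _ _ (noint_evo1 0 1))) (approx0_d 2 _ (approx0_d 2 _ (HL_evo1 0 1 ltac:(lia) ltac:(lia)))) t x Hx) as Hi1101; rewrite (val_canon _ t x Hx) in Hi1101; expand_val_in Hi1101;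
  pose proof (approx0_int _ (noint_push _ _ (noint_push _ _ (noint_evo1 0 2))) (approx0_d 2 _ (approx0_d 2 _ (HL_evo1 0 2 ltac:(lia) ltac:(lia)))) t x Hx) as Hi1102; rewrite (val_canon _ t x Hx) in Hi1102; expand_val_in Hi1102;
  pose proof (approx0_int _ (noint_push _ _ (noint_push _ _ (noint_evo1 1 0))) (approx0_d 2 _ (approx0_d 2 _ (HL_evo1 1 0 ltac:(lia) ltac:(lia)))) t x Hx) as Hi1110; rewrite (val_canon _ t x Hx) in Hi1110; expand_val_in Hi1110;
  pose proof (approx0_int _ (noint_push _ _ (noint_push _ _ (noint_evo1 1 1))) (approx0_d 2 _ (approx0_d 2 _ (HL_evo1 1 1 ltac:(lia) ltac:(lia)))) t x Hx) as Hi1111; rewrite (val_canon _ t x Hx) in Hi1111; expand_val_in Hi1111;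
  pose proof (approx0_int _ (noint_push _ _ (noint_push _ _ (noint_evo1 1 2))) (approx0_d 2 _ (approx0_d 2 _ (HL_evo1 1 2 ltac:(lia) ltac:(lia)))) t x Hx) as Hi1112; rewrite (val_canon _ t x Hx) in Hi1112; expand_val_in Hi1112;
  pose proof (approx0_int _ (noint_push _ _ (noint_push _ _ (noint_evo1 2 0))) (approx0_d 2 _ (approx0_d 2 _ (HL_evo1 2 0 ltac:(lia) ltac:(lia)))) t x Hx) as Hi1120; rewrite (val_canon _ t x Hx) in Hi1120; expand_val_in Hi1120;
  pose proof (approx0_int _ (noint_push _ _ (noint_push _ _ (noint_evo1 2 1))) (approx0_d 2 _ (approx0_d 2 _ (HL_evo1 2 1 ltac:(lia) ltac:(lia)))) t x Hx) as Hi1121; rewrite (val_canon _ t x Hx) in Hi1121; expand_val_in Hi1121;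
  pose proof (approx0_int _ (noint_push _ _ (noint_push _ _ (noint_evo1 2 2))) (approx0_d 2 _ (approx0_d 2 _ (HL_evo1 2 2 ltac:(lia) ltac:(lia)))) t x Hx) as Hi1122; rewrite (val_canon _ t x Hx) in Hi1122; expand_val_in Hi1122;
  pose proof (approx0_int _ (noint_push _ _ (noint_push _ _ (noint_evo1 0 0))) (approx0_d 2 _ (approx0_d 3 _ (HL_evo1 0 0 ltac:(lia) ltac:(lia)))) t x Hx) as Hi1200; rewrite (val_canon _ t x Hx) in Hi1200; expand_val_in Hi1200;
  pose proof (approx0_int _ (noint_push _ _ (noint_push _ _ (noint_evo1 0 1))) (approx0_d 2 _ (approx0_d 3 _ (HL_evo1 0 1 ltac:(lia) ltac:(lia)))) t x Hx) as Hi1201; rewrite (val_canon _ t x Hx) in Hi1201; expand_val_in Hi1201;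
  pose proof (approx0_int _ (noint_push _ _ (noint_push _ _ (noint_evo1 0 2))) (approx0_d 2 _ (approx0_d 3 _ (HL_evo1 0 2 ltac:(lia) ltac:(lia)))) t x Hx) as Hi1202; rewrite (val_canon _ t x Hx) in Hi1202; expand_val_in Hi1202;
  pose proof (approx0_int _ (noint_push _ _ (noint_push _ _ (noint_evo1 1 0))) (approx0_d 2 _ (approx0_d 3 _ (HL_evo1 1 0 ltac:(lia) ltac:(lia)))) t x Hx) as Hi1210; rewrite (val_canon _ t x Hx) in Hi1210; expand_val_in Hi1210;
  pose proof (approx0_int _ (noint_push _ _ (noint_push _ _ (noint_evo1 1 1))) (approx0_d 2 _ (approx0_d 3 _ (HL_evo1 1 1 ltac:(lia) ltac:(lia)))) t x Hx) as Hi1211; rewrite (val_canon _ t x Hx) in Hi1211; expand_val_in Hi1211;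
  pose proof (approx0_int _ (noint_push _ _ (noint_push _ _ (noint_evo1 1 2))) (approx0_d 2 _ (approx0_d 3 _ (HL_evo1 1 2 ltac:(lia) ltac:(lia)))) t x Hx) as Hi1212; rewrite (val_canon _ t x Hx) in Hi1212; expand_val_in Hi1212;
  pose proof (approx0_int _ (noint_push _ _ (noint_push _ _ (noint_evo1 2 0))) (approx0_d 2 _ (approx0_d 3 _ (HL_evo1 2 0 ltac:(lia) ltac:(lia)))) t x Hx) as Hi1220; rewrite (val_canon _ t x Hx) in Hi1220; expand_val_in Hi1220;
  pose proof (approx0_int _ (noint_push _ _ (noint_push _ _ (noint_evo1 2 1))) (approx0_d 2 _ (approx0_d 3 _ (HL_evo1 2 1 ltac:(lia) ltac:(lia)))) t x Hx) as Hi1221; rewrite (val_canon _ t x Hx) in Hi1221; expand_val_in Hi1221;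
  pose proof (approx0_int _ (noint_push _ _ (noint_push _ _ (noint_evo1 2 2))) (approx0_d 2 _ (approx0_d 3 _ (HL_evo1 2 2 ltac:(lia) ltac:(lia)))) t x Hx) as Hi1222; rewrite (val_canon _ t x Hx) in Hi1222; expand_val_in Hi1222;
  pose proof (approx0_int _ (noint_push _ _ (noint_push _ _ (noint_evo1 0 0))) (approx0_d 3 _ (approx0_d 3 _ (HL_evo1 0 0 ltac:(lia) ltac:(lia)))) t x Hx) as Hi2200; rewrite (val_canon _ t x Hx) in Hi2200; expand_val_in Hi2200;
  pose proof (approx0_int _ (noint_push _ _ (noint_push _ _ (noint_evo1 0 1))) (approx0_d 3 _ (approx0_d 3 _ (HL_evo1 0 1 ltac:(lia) ltac:(lia)))) t x Hx) as Hi2201; rewrite (val_canon _ t x Hx) in Hi2201; expand_val_in Hi2201;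
  pose proof (approx0_int _ (noint_push _ _ (noint_push _ _ (noint_evo1 0 2))) (approx0_d 3 _ (approx0_d 3 _ (HL_evo1 0 2 ltac:(lia) ltac:(lia)))) t x Hx) as Hi2202; rewrite (val_canon _ t x Hx) in Hi2202; expand_val_in Hi2202;
  pose proof (approx0_int _ (noint_push _ _ (noint_push _ _ (noint_evo1 1 0))) (approx0_d 3 _ (approx0_d 3 _ (HL_evo1 1 0 ltac:(lia) ltac:(lia)))) t x Hx) as Hi2210; rewrite (val_canon _ t x Hx) in Hi2210; expand_val_in Hi2210;
  pose proof (approx0_int _ (noint_push _ _ (noint_push _ _ (noint_evo1 1 1))) (approx0_d 3 _ (approx0_d 3 _ (HL_evo1 1 1 ltac:(lia) ltac:(lia)))) t x Hx) as Hi2211; rewrite (val_canon _ t x Hx) in Hi2211; expand_val_in Hi2211;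
  pose proof (approx0_int _ (noint_push _ _ (noint_push _ _ (noint_evo1 1 2))) (approx0_d 3 _ (approx0_d 3 _ (HL_evo1 1 2 ltac:(lia) ltac:(lia)))) t x Hx) as Hi2212; rewrite (val_canon _ t x Hx) in Hi2212; expand_val_in Hi2212;
  pose proof (approx0_int _ (noint_push _ _ (noint_push _ _ (noint_evo1 2 0))) (approx0_d 3 _ (approx0_d 3 _ (HL_evo1 2 0 ltac:(lia) ltac:(lia)))) t x Hx) as Hi2220; rewrite (val_canon _ t x Hx) in Hi2220; expand_val_in Hi2220;
  pose proof (approx0_int _ (noint_push _ _ (noint_push _ _ (noint_evo1 2 1))) (approx0_d 3 _ (approx0_d 3 _ (HL_evo1 2 1 ltac:(lia) ltac:(lia)))) t x Hx) as Hi2221; rewrite (val_canon _ t x Hx) in Hi2221; expand_val_in Hi2221;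
  pose proof (approx0_int _ (noint_push _ _ (noint_push _ _ (noint_evo1 2 2))) (approx0_d 3 _ (approx0_d 3 _ (HL_evo1 2 2 ltac:(lia) ltac:(lia)))) t x Hx) as Hi2222; rewrite (val_canon _ t x Hx) in Hi2222; expand_val_in Hi2222;
  lra.

Lemma eq1 : forall t x i j, V t x -> (i < 3)%nat -> (j < 3)%nat ->
  dtM (dtM gamma) t x i j + Sf (inc gamma) t x i j - 2 * hess alpha_f t x i j
  - 2 * def (dtV beta_f) t x i j = 0.
Proof.
  intros t x i j Hx Hi Hj.
  unfold inc, alpha_f.
  rewrite (approxM_ddg i j Hi Hj t x Hx).
  rewrite (approxM_S _ _ (approxM_curl _ _ (approxM_trans _ _ (approxM_curl _ _ approxM_g)))
             i j Hi Hj t x Hx).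
  rewrite (approxM_hess _ _ (approx_scale (/2) _ _ (approx_tr _ _ approxM_g)) i j Hi Hj t x Hx).
  rewrite (approxM_def _ _ dtbeta_approx i j Hi Hj t x Hx).
  apply comb4. rewrite (val_canon _ t x Hx).
  destruct i as [|[|[|i]]]; try lia; destruct j as [|[|[|j]]]; try lia;
    expand_val; fin1 t x Hx.
Qed.

Lemma eq2 : forall t x i, V t x -> (i < 3)%nat ->
  div (Sf (maddf (dtM gamma) (mscalef (-2) (def beta_f)))) t x i = 0.
Proof.
  intros t x i Hx Hi.
  rewrite (approxV_div _ _ (approxM_S _ _ (approxM_add _ _ _ _ approxM_dg
            (approxM_scM (-2) _ _ (approxM_def _ _ beta_approx)))) i Hi t x Hx).
  rewrite (val_canon _ t x Hx).
  destruct i as [|[|[|i]]]; try lia; expand_val; fin2 t x Hx.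
Qed.

Lemma main_sec : forall t x, 0 <= t <= T -> Omega x ->
  (forall i j, (i < 3)%nat -> (j < 3)%nat ->
     dtM (dtM gamma) t x i j + Sf (inc gamma) t x i j
     - 2 * hess alpha_f t x i j - 2 * def (dtV beta_f) t x i j = 0) /\
  (forall i, (i < 3)%nat ->
     div (Sf (maddf (dtM gamma) (mscalef (-2) (def beta_f)))) t x i = 0) /\
  divdiv (Sf gamma) t x = 0.
Proof.
  intros t x Ht Hx.
  assert (HV : V t x) by (split; auto).
  split; [|split].
  - intros i j Hi Hj; apply eq1; auto.
  - intros i Hi; apply eq2; auto.
  - apply Hcons; auto.
Qed.

End Terms.

Theorem theorem2p1
  (Omega : R3 -> Prop) (T : R)
  (A gamma : mfield) (A0 gamma0 : R3 -> mat)
  (U : R -> R3 -> Prop)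
  (HOmega : open Omega)
  (HT : 0 < T)
  (HU : open (fun p : R * R3 => U (fst p) (snd p)))
  (HUcov : forall t x, 0 <= t <= T -> Omega x -> U t x)
  (HAsm : smooth_on_m U A)
  (Hgsm : smooth_on_m U gamma)
  (HAT : forall t x, 0 <= t <= T -> Omega x -> is_tracefree (A t x))
  (HgS : forall t x, 0 <= t <= T -> Omega x -> is_sym (gamma t x))
  (Hdiv : forall t x i, 0 <= t <= T -> Omega x -> (i < 3)%nat ->
            div A t x i = 0)
  (Hevo1 : forall t x i j, 0 <= t <= T -> Omega x -> (i < 3)%nat -> (j < 3)%nat ->
            dtM A t x i j + curl (Sf gamma) t x i j = 0)
  (Hevo2 : forall t x i j, 0 <= t <= T -> Omega x -> (i < 3)%nat -> (j < 3)%nat ->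
            Sf (dtM gamma) t x i j - symf (curl A) t x i j = 0)
  (Hcons : forall t x, 0 <= t <= T -> Omega x -> divdiv (Sf gamma) t x = 0)
  (HA0 : forall x, Omega x -> A 0 x = A0 x)
  (Hg0 : forall x, Omega x -> gamma 0 x = gamma0 x) :
  let alpha : sfield := fun t x => / 2 * trf gamma t x in
  let beta : vfield := fun t x i =>
      / 2 * RInt (fun s => div (Sf gamma) s x i) 0 t + vskw (A0 x) i in
  forall t x, 0 <= t <= T -> Omega x ->
    (forall i j, (i < 3)%nat -> (j < 3)%nat ->
       dtM (dtM gamma) t x i j + Sf (inc gamma) t x i j
       - 2 * hess alpha t x i j - 2 * def (dtV beta) t x i j = 0) /\
    (forall i, (i < 3)%nat ->
       div (Sf (maddf (dtM gamma) (mscalef (-2) (def beta)))) t x i = 0) /\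
    divdiv (Sf gamma) t x = 0.
Proof.
  intros alpha beta t x Ht Hx.
  exact (main_sec Omega T U HOmega HT HU HUcov A gamma A0 HAsm Hgsm HAT HgS Hdiv
           Hevo1 Hevo2 Hcons HA0 t x Ht Hx).
Qed.
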